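(* Let $(u^{\mathrm{in}},v^{\mathrm{in}})\in(\dot H^0)^2$ and let $N$ be a positive integer. Then the solution $(u^N,v^N)$ of the Galerkin system $$\partial_t u^N_k=\tfrac12 i\,\mathcal P\Big[k\sum_{k_1+k_2=k}e^{3ikk_1k_2t}\big((\mathcal Pu^N)_{k_1}(\mathcal Pv^N)_{k_2}-(\mathcal Pu^N)_{k_1}(\mathcal Pu^N)_{k_2}\big)\Big],$$ $$\partial_t v^N_k=\tfrac12 i\,\mathcal P\Big[k\sum_{k_1+k_2=k}e^{3ikk_1k_2t}\big((\mathcal Pu^N)_{k_1}(\mathcal Pv^N)_{k_2}-(\mathcal Pv^N)_{k_1}(\mathcal Pv^N)_{k_2}\big)\Big],$$ $k\in\mathbb Z_0$, $u^N_k(0)=u^{\mathrm{in}}_k$, $v^N_k(0)=v^{\mathrm{in}}_k$, exists globally in time. Furthermore, the quantity $$\mathcal E(u^N(t),v^N(t)):=2\|u^N(t)\|_{\dot H^0}^2+2\|v^N(t)\|_{\dot H^0}^2+\|u^N(t)-v^N(t)\|_{\dot H^0}^2$$ is conserved in time.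
   Context: $\mathbb T=[0,2\pi]$ periodic, $\mathbb Z_0=\mathbb Z\setminus\{0\}$. Mean-zero real-valued functions are identified with their Fourier coefficients $(u_k)_{k\in\mathbb Z_0}$, $\overline{u_k}=u_{-k}$. For $s\in\mathbb R$, $\|u\|_{\dot H^s}^2=\sum_{k\in\mathbb Z_0}|k|^{2s}|u_k|^2$, $\dot H^s$ the space of such $u$ with finite norm, and $\|(u,v)\|^2_{(\dot H^s)^2}=\|u\|^2_{\dot H^s}+\|v\|^2_{\dot H^s}$. For the fixed integer $N$, $\mathcal P$ is the projection onto Fourier modes $|k|\leq N$: $(\mathcal Pu)_k=u_k$ if $|k|\leq N$ and $0$ if $|k|>N$; applied to the bracketed sequence indexed by $k$, it sets the $k$-th component to zero when $|k|>N$. The Galerkin system is a finite system of ODEs, locally well-posed in $(\dot H^0)^2$. *)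

(* Defs.v *)
From Stdlib Require Export Reals ZArith.
From Coquelicot Require Export Coquelicot.

(* A mean-zero function is represented by its Fourier coefficients
   u : Z -> C (the coefficient u 0 is required to vanish). *)
Definition fourier := Z -> C.

Definition real_meanzero (u : fourier) : Prop :=
  u 0%Z = RtoC 0 /\ forall k : Z, Cconj (u k) = u (- k)%Z.

(* terms of ||u||_{H^0}^2 = sum_{k in Z_0} |u_k|^2, grouped as k = +-(n+1) *)
Definition L2_terms (u : fourier) (n : nat) : R :=
  (Cmod (u (Z.of_nat n + 1)%Z))^2 + (Cmod (u (- (Z.of_nat n + 1))%Z))^2.

Definition in_H0 (u : fourier) : Prop :=
  real_meanzero u /\ ex_series (L2_terms u).

Definition H0_norm2 (u : fourier) : R := Series (L2_terms u).

Definition fsub (u v : fourier) : fourier := fun k => Cminus (u k) (v k).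

Definition energy (u v : fourier) : R :=
  2 * H0_norm2 u + 2 * H0_norm2 v + H0_norm2 (fsub u v).

Definition proj (N : nat) (u : fourier) : fourier :=
  fun k => if (k =? 0)%Z then RtoC 0
           else if (Z.abs k <=? Z.of_nat N)%Z then u k else RtoC 0.

Definition cexpi (theta : R) : C := (cos theta, sin theta).

(* sum_{k1 + k2 = k} e^{3 i k k1 k2 t} a_{k1} b_{k2}, for a b supported
   in 0 < |j| <= N: the sum runs over k1 = j - N, j = 0..2N. *)
Definition conv (N : nat) (t : R) (k : Z) (a b : fourier) : C :=
  sum_n (fun j : nat =>
           let k1 := (Z.of_nat j - Z.of_nat N)%Z in
           let k2 := (k - k1)%Z in
           Cmult (cexpi (3 * IZR k * IZR k1 * IZR k2 * t)) (Cmult (a k1) (b k2)))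
        (2 * N).

(* The right-hand sides of the Galerkin system, for k in Z_0.
   The outer projection P sets the k-th component to 0 when |k| > N. *)
Definition rhs_u (N : nat) (t : R) (u v : fourier) (k : Z) : C :=
  if (Z.abs k <=? Z.of_nat N)%Z then
    Cmult (Cmult (Cmult (RtoC (/2)) Ci) (RtoC (IZR k)))
      (Cminus (conv N t k (proj N u) (proj N v))
              (conv N t k (proj N u) (proj N u)))
  else RtoC 0.

Definition rhs_v (N : nat) (t : R) (u v : fourier) (k : Z) : C :=
  if (Z.abs k <=? Z.of_nat N)%Z then
    Cmult (Cmult (Cmult (RtoC (/2)) Ci) (RtoC (IZR k)))
      (Cminus (conv N t k (proj N u) (proj N v))
              (conv N t k (proj N v) (proj N v)))
  else RtoC 0.

(* Main.v *)
Require Import Defs.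
From Stdlib Require Import Lra Lia FunctionalExtensionality Bool Classical.
Open Scope R_scope.

Lemma normC_Cmod (z : C) : @norm R_AbsRing C_R_NormedModule z = Cmod z.
Proof.
  destruct z as [a b]. unfold Cmod.
  change (sqrt (Rabs a ^ 2 + Rabs b ^ 2) = sqrt (a^2 + b^2)). rewrite !pow2_abs. reflexivity.
Qed.
Lemma minusC (a b : C) : @minus C_R_NormedModule a b = Cminus a b.
Proof. destruct a, b; reflexivity. Qed.
Lemma plusC (a b : C) : @plus C_R_NormedModule a b = Cplus a b.
Proof. destruct a, b; reflexivity. Qed.

Lemma Cmod_tri3 (a b c : C) : Cmod (Cminus a c) <= Cmod (Cminus a b) + Cmod (Cminus b c).
Proof.
  replace (Cminus a c) with (Cplus (Cminus a b) (Cminus b c)) by ring.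
  apply Cmod_triangle.
Qed.

Lemma Cmod_le_sum (z : C) : Cmod z <= Rabs (fst z) + Rabs (snd z).
Proof.
  destruct z as [a b]; simpl. unfold Cmod; simpl.
  rewrite <- (sqrt_pow2 (Rabs a + Rabs b)) by (pose proof (Rabs_pos a); pose proof (Rabs_pos b); lra).
  apply sqrt_le_1_alt.
  rewrite <- (pow2_abs a) at 1. rewrite <- (pow2_abs b) at 1.
  pose proof (Rabs_pos a); pose proof (Rabs_pos b). nra.
Qed.

Lemma Rabs_fst_le (z : C) : Rabs (fst z) <= Cmod z.
Proof. destruct z; apply (re_le_Cmod (r,r0)). Qed.
Lemma Rabs_snd_le (z : C) : Rabs (snd z) <= Cmod z.
Proof.
  destruct z as [a b]. unfold Cmod; simpl.
  rewrite <- sqrt_Rsqr_abs. apply sqrt_le_1_alt. unfold Rsqr. nra.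
Qed.

Lemma Cmod_eq0_minus (a b : C) : Cmod (Cminus a b) <= 0 -> a = b.
Proof.
  intros H. assert (H0 : Cmod (Cminus a b) = 0) by (pose proof (Cmod_ge_0 (Cminus a b)); lra).
  apply Cmod_eq_0 in H0.
  replace a with (Cplus (Cminus a b) b) by ring. rewrite H0. ring.
Qed.

Lemma lip_continuous (f : R -> C) (c : R) :
  (forall s s', Cmod (Cminus (f s) (f s')) <= c * Rabs (s - s')) ->
  forall s, @continuous R_UniformSpace C_R_NormedModule f s.
Proof.
  intros H s. unfold continuous. apply filterlim_locally. intros eps.
  assert (Hc : 0 < Rabs c + 1) by (pose proof (Rabs_pos c); lra).
  assert (Hd : 0 < eps / (Rabs c + 1)) by (apply Rdiv_lt_0_compat; [apply cond_pos|lra]).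
  exists (mkposreal _ Hd). intros y Hy.
  apply (@norm_compat1 R_AbsRing C_R_NormedModule).
  rewrite minusC, normC_Cmod.
  change (Rabs (y - s) < eps / (Rabs c + 1)) in Hy.
  eapply Rle_lt_trans. apply H.
  apply Rle_lt_trans with (Rabs c * Rabs (y - s)).
  { apply Rmult_le_compat_r. apply Rabs_pos. apply Rle_abs. }
  apply Rle_lt_trans with ((Rabs c + 1) * Rabs (y - s)).
  { pose proof (Rabs_pos (y - s)). nra. }
  apply (Rmult_lt_compat_l (Rabs c + 1)) in Hy; [|lra].
  replace ((Rabs c + 1) * (eps / (Rabs c + 1))) with (pos eps) in Hy by (field; lra).
  lra.
Qed.

Lemma RInt_conj (f : R -> C) a b :
  @ex_RInt C_R_NormedModule f a b ->
  @RInt C_R_CompleteNormedModule (fun s => Cconj (f s)) a b = Cconj (@RInt C_R_CompleteNormedModule f a b).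
Proof.
  intros H. apply is_RInt_unique.
  pose proof (@RInt_correct C_R_CompleteNormedModule f a b H) as Hc.
  set (l := @RInt C_R_CompleteNormedModule f a b) in *.
  pose proof (@is_RInt_fct_extend_fst R_NormedModule R_NormedModule f a b l Hc) as H1.
  pose proof (@is_RInt_fct_extend_snd R_NormedModule R_NormedModule f a b l Hc) as H2.
  apply (@is_RInt_opp R_NormedModule) in H2.
  pose proof (@is_RInt_fct_extend_pair R_NormedModule R_NormedModule (fun s => Cconj (f s)) a b _ _ H1 H2) as H3.
  exact H3.
Qed.
Lemma plusC' (a b : C) : @plus (CompleteNormedModule.AbelianMonoid R_AbsRing C_R_CompleteNormedModule) a b = Cplus a b.
Proof. destruct a, b; reflexivity. Qed.
Lemma minusC' (a b : C) : @minus (CompleteNormedModule.AbelianGroup R_AbsRing C_R_CompleteNormedModule) a b = Cminus a b.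
Proof. destruct a, b; reflexivity. Qed.
Lemma Cdiff_aux (u a b : C) : Cminus (Cplus u (Cplus a b)) (Cplus u a) = b.
Proof. ring. Qed.
Lemma Cdiff2 (u a : C) : Cminus (Cplus u a) u = a.
Proof. ring. Qed.
Lemma Cdiff3 (u a b : C) : Cminus (Cplus u a) (Cplus u b) = Cminus a b.
Proof. ring. Qed.
Lemma Cmod_minus_lip (f g : R -> C) c1 c2 :
  (forall s s', Cmod (Cminus (f s) (f s')) <= c1 * Rabs (s - s')) ->
  (forall s s', Cmod (Cminus (g s) (g s')) <= c2 * Rabs (s - s')) ->
  forall s s', Cmod (Cminus (Cminus (f s) (g s)) (Cminus (f s') (g s'))) <= (c1 + c2) * Rabs (s - s').
Proof.
  intros Hf Hg s s'.
  replace (Cminus (Cminus (f s) (g s)) (Cminus (f s') (g s'))) with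
    (Cplus (Cminus (f s) (f s')) (Copp (Cminus (g s) (g s')))) by ring.
  eapply Rle_trans. apply Cmod_triangle. rewrite Cmod_opp.
  specialize (Hf s s'). specialize (Hg s s'). lra.
Qed.
Lemma plusR (a b : R) : @plus R_AbelianMonoid a b = a + b.
Proof. reflexivity. Qed.
Lemma fst_Cminus (a b : C) : fst (Cminus a b) = fst a - fst b.
Proof. destruct a, b; simpl; ring. Qed.
Lemma snd_Cminus (a b : C) : snd (Cminus a b) = snd a - snd b.
Proof. destruct a, b; simpl; ring. Qed.
Lemma Cmod_minus_sym (a b : C) : Cmod (Cminus a b) = Cmod (Cminus b a).
Proof. replace (Cminus a b) with (Copp (Cminus b a)) by ring. apply Cmod_opp. Qed.
Lemma zeroC : @zero (CompleteNormedModule.AbelianMonoid R_AbsRing C_R_CompleteNormedModule) = RtoC 0.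
Proof. reflexivity. Qed.
Lemma Cmult_minus_distr_l_aux (c a b : C) : Cminus (Cmult c a) (Cmult c b) = Cmult c (Cminus a b).
Proof. ring. Qed.

Lemma int_pow_bound (h : R -> C) (c : R) (m : nat) :
  0 <= c -> (forall s, @continuous R_UniformSpace C_R_NormedModule h s) ->
  (forall s, Cmod (h s) <= c * Rabs s ^ m) ->
  forall t, Cmod (@RInt C_R_CompleteNormedModule h 0 t) <= c * Rabs t ^ (S m) / INR (S m).
Proof.
  intros Hc Hcont Hb t.
  assert (HS : 0 < INR (S m)) by (apply lt_0_INR; lia).
  destruct (Rle_or_lt 0 t) as [Ht|Ht].
  - rewrite (Rabs_pos_eq t) by lra. rewrite <- normC_Cmod.
    apply (@norm_RInt_le C_R_NormedModule h (fun s => c * s ^ m) 0 t _ (c * t ^ (S m) / INR (S m))).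
    + exact Ht.
    + intros x Hx. rewrite normC_Cmod. rewrite <- (Rabs_pos_eq x) at 2 by lra. apply Hb.
    + apply (@RInt_correct C_R_CompleteNormedModule). apply (@ex_RInt_continuous C_R_CompleteNormedModule). intros z _. apply Hcont.
    + replace (c * t ^ S m / INR (S m)) with (c * t ^ S m / INR (S m) - c * 0 ^ S m / INR (S m))
        by (rewrite pow_i by lia; unfold Rdiv; ring).
      apply (is_RInt_derive (fun s => c * s ^ S m / INR (S m))).
      * intros x _. auto_derive. trivial.
        change (match m with 0%nat => 1 | S _ => INR m + 1 end) with (INR (S m)).
        field. lra.
      * intros x _. apply (ex_derive_continuous (fun s => c * s ^ m)). auto_derive. trivial.
  - assert (Hex : @ex_RInt C_R_NormedModule h t 0).
    { apply (@ex_RInt_continuous C_R_CompleteNormedModule). intros z _. apply Hcont. }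
    rewrite <- (@opp_RInt_swap C_R_CompleteNormedModule h t 0 Hex).
    rewrite <- normC_Cmod. rewrite (@norm_opp R_AbsRing C_R_NormedModule).
    apply Rle_trans with (c * (-t) ^ S m / INR (S m)).
    + apply (@norm_RInt_le C_R_NormedModule h (fun s => c * (-s) ^ m) t 0 _ (c * (-t) ^ (S m) / INR (S m))).
      * lra.
      * intros x Hx. rewrite normC_Cmod. rewrite <- (Rabs_left1 x) by lra. apply Hb.
      * apply (@RInt_correct C_R_CompleteNormedModule). exact Hex.
      * replace (c * (-t) ^ S m / INR (S m)) with ((- c * (- 0) ^ S m / INR (S m)) - (- c * (-t) ^ S m / INR (S m)))
          by (simpl; unfold Rdiv; ring).
        apply (is_RInt_derive (fun s => - c * (-s) ^ S m / INR (S m))).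
        -- intros x _. auto_derive. trivial.
           change (match m with 0%nat => 1 | S _ => INR m + 1 end) with (INR (S m)).
           field. lra.
        -- intros x _. apply (ex_derive_continuous (fun s => c * (-s) ^ m)). auto_derive. trivial.
    + rewrite Rabs_left by lra. lra.
Qed.

Notation RIntC := (@RInt C_R_CompleteNormedModule).

Lemma eps_le (a c : R) (e : nat -> R) :
  (forall n, a <= c + e n) -> is_lim_seq e 0 -> a <= c.
Proof.
  intros H He.
  assert (H1 : is_lim_seq (fun n => c + e n) (c + 0)).
  { apply is_lim_seq_plus'. apply is_lim_seq_const. exact He. }
  pose proof (is_lim_seq_le (fun _ => a) (fun n => c + e n) a (c + 0) H (is_lim_seq_const a) H1) as H2.
  simpl in H2. lra.
Qed.

Section ODE.
Variable I : Type.
Variable G : I -> R -> (I -> C) -> C.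
Variable x0 : I -> C.
Variables B L K : R.
Hypothesis HB0 : 0 <= B.
Hypothesis HL0 : 0 <= L.
Hypothesis HK0 : 0 <= K.
Hypothesis HB : forall i s x, Cmod (G i s x) <= B.
Hypothesis HL : forall i s x y d, (forall j, Cmod (Cminus (x j) (y j)) <= d) ->
  Cmod (Cminus (G i s x) (G i s y)) <= L * d.
Hypothesis HT : forall i s s' x, Cmod (Cminus (G i s x) (G i s' x)) <= K * Rabs (s - s').

Fixpoint pic (n : nat) : R -> I -> C :=
  match n with
  | O => fun _ => x0
  | S m => fun t i => Cplus (x0 i) (RIntC (fun s => G i s (pic m s)) 0 t)
  end.

Lemma comp_lip (x : R -> I -> C) :
  (forall j t t', Cmod (Cminus (x t j) (x t' j)) <= B * Rabs (t - t')) ->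
  forall i s s', Cmod (Cminus (G i s (x s)) (G i s' (x s'))) <= (L * B + K) * Rabs (s - s').
Proof.
  intros Hx i s s'.
  eapply Rle_trans. apply (Cmod_tri3 _ (G i s (x s'))).
  assert (H1 := HL i s (x s) (x s') (B * Rabs (s - s')) (fun j => Hx j s s')).
  assert (H2 := HT i s s' (x s')).
  nra.
Qed.

Lemma comp_cont (x : R -> I -> C) :
  (forall j t t', Cmod (Cminus (x t j) (x t' j)) <= B * Rabs (t - t')) ->
  forall i s, @continuous R_UniformSpace C_R_NormedModule (fun s => G i s (x s)) s.
Proof.
  intros Hx i. apply (lip_continuous _ (L * B + K)). apply comp_lip. exact Hx.
Qed.

Lemma comp_exint (x : R -> I -> C) :
  (forall j t t', Cmod (Cminus (x t j) (x t' j)) <= B * Rabs (t - t')) ->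
  forall i a b, @ex_RInt C_R_NormedModule (fun s => G i s (x s)) a b.
Proof.
  intros Hx i a b. apply (@ex_RInt_continuous C_R_CompleteNormedModule).
  intros z _. apply comp_cont. exact Hx.
Qed.

Lemma int_lip (x : R -> I -> C) :
  (forall j t t', Cmod (Cminus (x t j) (x t' j)) <= B * Rabs (t - t')) ->
  forall i t t', Cmod (Cminus (Cplus (x0 i) (RIntC (fun s => G i s (x s)) 0 t))
                              (Cplus (x0 i) (RIntC (fun s => G i s (x s)) 0 t'))) <= B * Rabs (t - t').
Proof.
  intros Hx i t t'.
  pose proof (comp_exint x Hx i) as He.
  rewrite <- (@RInt_Chasles C_R_CompleteNormedModule _ 0 t' t (He _ _) (He _ _)).
  rewrite (plusC' (RIntC _ 0 t')).
  rewrite Cdiff_aux.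
  rewrite <- normC_Cmod.
  rewrite Rmult_comm.
  apply (@norm_RInt_le_const_abs C_R_NormedModule (fun s => G i s (x s)) t' t).
  - intros z _. rewrite normC_Cmod. apply HB.
  - apply (@RInt_correct C_R_CompleteNormedModule). apply He.
Qed.

Lemma pic_lip : forall n j t t', Cmod (Cminus (pic n t j) (pic n t' j)) <= B * Rabs (t - t').
Proof.
  induction n as [|n IH]; intros j t t'.
  - simpl. replace (Cminus (x0 j) (x0 j)) with (RtoC 0) by ring. rewrite Cmod_0.
    pose proof (Rabs_pos (t - t')). nra.
  - simpl. apply int_lip. exact IH.
Qed.

Definition Dl n t i := Cminus (pic (S n) t i) (pic n t i).
Definition bnd n t := B * L ^ n * Rabs t ^ (S n) / INR (fact (S n)).

Lemma g_lip n i : forall s s',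
  Cmod (Cminus (G i s (pic n s)) (G i s' (pic n s'))) <= (L * B + K) * Rabs (s - s').
Proof. apply comp_lip. apply pic_lip. Qed.

Lemma bnd_nonneg n t : 0 <= bnd n t.
Proof.
  unfold bnd. apply Rmult_le_pos.
  - apply Rmult_le_pos. apply Rmult_le_pos. lra. apply pow_le; lra. apply pow_le, Rabs_pos.
  - apply Rlt_le, Rinv_0_lt_compat, lt_0_INR, lt_O_fact.
Qed.

Lemma Dl_bound : forall n i t, Cmod (Dl n t i) <= bnd n t.
Proof.
  induction n as [|n IH]; intros i t.
  - unfold Dl. simpl pic. rewrite Cdiff2.
    rewrite <- normC_Cmod.
    eapply Rle_trans.
    { apply (@norm_RInt_le_const_abs C_R_NormedModule (fun s => G i s x0) 0 t _ B).
      - intros z _. rewrite normC_Cmod. apply HB.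
      - apply (@RInt_correct C_R_CompleteNormedModule). apply (comp_exint (fun _ => x0)).
        intros j t1 t2. replace (Cminus (x0 j) (x0 j)) with (RtoC 0) by ring. rewrite Cmod_0.
        pose proof (Rabs_pos (t1 - t2)). nra. }
    unfold bnd. simpl. rewrite Rminus_0_r. lra.
  - unfold Dl. change (pic (S (S n)) t i) with (Cplus (x0 i) (RIntC (fun s => G i s (pic (S n) s)) 0 t)).
    change (pic (S n) t i) with (Cplus (x0 i) (RIntC (fun s => G i s (pic n s)) 0 t)).
    rewrite Cdiff3.
    rewrite <- minusC'.
    rewrite <- (@RInt_minus C_R_CompleteNormedModule).
    2,3: apply comp_exint; apply pic_lip.
    set (c := L * (B * L ^ n / INR (fact (S n)))).
    assert (Hc : 0 <= c).
    { unfold c. apply Rmult_le_pos. lra. apply Rmult_le_pos. apply Rmult_le_pos. lra. apply pow_le; lra.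
      apply Rlt_le, Rinv_0_lt_compat, lt_0_INR, lt_O_fact. }
    eapply Rle_trans.
    { apply (int_pow_bound _ c (S n) Hc).
      - apply (lip_continuous _ ((L * B + K) + (L * B + K))).
        intros s s'. apply (Cmod_minus_lip (fun s => G i s (pic (S n) s)) (fun s => G i s (pic n s))); apply g_lip.
      - intros s. rewrite minusC'.
        eapply Rle_trans. apply (HL i s (pic (S n) s) (pic n s) (bnd n s)).
        + intros j. apply IH.
        + unfold bnd, c. right. field. apply not_0_INR, fact_neq_0. }
    unfold bnd, c. right. rewrite (fact_simpl (S n)), mult_INR.
    simpl pow. field. split. apply not_0_INR, fact_neq_0. apply not_0_INR. lia.
Qed.

Lemma bnd_le n t : bnd n t <= (B * Rabs t) * ((L * Rabs t) ^ n / INR (fact n)).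
Proof.
  unfold bnd. rewrite Rpow_mult_distr. simpl pow.
  assert (H1 : 0 < INR (fact n)) by (apply lt_0_INR, lt_O_fact).
  assert (H2 : INR (fact n) <= INR (fact (S n))).
  { apply le_INR. rewrite fact_simpl. lia. }
  assert (H3 : 0 <= B * L ^ n * (Rabs t * Rabs t ^ n)).
  { apply Rmult_le_pos. apply Rmult_le_pos. lra. apply pow_le; lra.
    apply Rmult_le_pos. apply Rabs_pos. apply pow_le, Rabs_pos. }
  replace (B * Rabs t * (L ^ n * Rabs t ^ n / INR (fact n))) with
    (B * L ^ n * (Rabs t * Rabs t ^ n) / INR (fact n)) by (field; lra).
  unfold Rdiv. apply Rmult_le_compat_l. exact H3.
  apply Rinv_le_contravar; lra.
Qed.

Lemma ex_exp_series (y : R) : ex_series (fun n => y ^ n / INR (fact n)).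
Proof.
  pose proof (is_exp_Reals y) as H.
  eexists. eapply is_series_ext; [|exact H].
  intros n. simpl. rewrite pow_n_pow. unfold scal; simpl. unfold mult; simpl. unfold Rdiv. ring.
Qed.

Lemma bnd_ex t : ex_series (fun n => bnd n t).
Proof.
  apply (@ex_series_le R_AbsRing R_CompleteNormedModule _ (fun n => (B * Rabs t) * ((L * Rabs t) ^ n / INR (fact n)))).
  - intros n. unfold norm; simpl. unfold abs; simpl. rewrite Rabs_pos_eq by apply bnd_nonneg. apply bnd_le.
  - pose proof (ex_series_scal_l (B * Rabs t) _ (ex_exp_series (L * Rabs t))) as H. exact H.
Qed.

Definition Xc (t : R) (i : I) : C :=
  (fst (x0 i) + Series (fun n => fst (Dl n t i)), snd (x0 i) + Series (fun n => snd (Dl n t i))).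
Definition tau n t := Series (fun k => bnd (S n + k) t).

Lemma pic_fst n t i : fst (pic (S n) t i) = fst (x0 i) + sum_n (fun k => fst (Dl k t i)) n.
Proof.
  induction n as [|n IH].
  - rewrite sum_O. unfold Dl. simpl pic. simpl. ring.
  - rewrite sum_n_Reals in *. rewrite tech5, <- Rplus_assoc, <- IH. unfold Dl. simpl fst. ring.
Qed.
Lemma pic_snd n t i : snd (pic (S n) t i) = snd (x0 i) + sum_n (fun k => snd (Dl k t i)) n.
Proof.
  induction n as [|n IH].
  - rewrite sum_O. unfold Dl. simpl pic. simpl. ring.
  - rewrite sum_n_Reals in *. rewrite tech5, <- Rplus_assoc, <- IH. unfold Dl. simpl snd. ring.
Qed.

Lemma tail_bound (a : nat -> R) (t : R) n :
  (forall k, Rabs (a k) <= bnd k t) ->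
  Rabs (Series a - sum_n a n) <= tau n t.
Proof.
  intros Ha.
  assert (Hex : ex_series a).
  { apply (@ex_series_le R_AbsRing R_CompleteNormedModule _ (fun k => bnd k t)). exact Ha. apply bnd_ex. }
  rewrite (Series_incr_n a (S n)) by (lia || exact Hex).
  rewrite sum_n_Reals. simpl pred.
  replace (sum_f_R0 a n + Series (fun k : nat => a (S n + k)%nat) - sum_f_R0 a n) with
    (Series (fun k : nat => a (S n + k)%nat)) by ring.
  assert (Hb : ex_series (fun k => bnd (S n + k) t)).
  { apply (ex_series_incr_n (fun k => bnd k t) (S n)). apply bnd_ex. }
  eapply Rle_trans. apply Series_Rabs.
  { apply (@ex_series_le R_AbsRing R_CompleteNormedModule _ (fun k => bnd (S n + k) t)).
    intros k. unfold norm; simpl. unfold abs; simpl. rewrite Rabs_Rabsolu. apply Ha. exact Hb. }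
  apply Series_le. intros k. split. apply Rabs_pos. apply Ha. exact Hb.
Qed.

Lemma Xc_close n t i : Cmod (Cminus (Xc t i) (pic (S n) t i)) <= 2 * tau n t.
Proof.
  eapply Rle_trans. apply Cmod_le_sum.
  assert (H1 : Rabs (fst (Cminus (Xc t i) (pic (S n) t i))) <= tau n t).
  { replace (fst (Cminus (Xc t i) (pic (S n) t i))) with
      (Series (fun k => fst (Dl k t i)) - sum_n (fun k => fst (Dl k t i)) n).
    2:{ rewrite fst_Cminus, pic_fst. unfold Xc. cbn [fst]. ring. }
    apply tail_bound. intros k. eapply Rle_trans. apply Rabs_fst_le. apply Dl_bound. }
  assert (H2 : Rabs (snd (Cminus (Xc t i) (pic (S n) t i))) <= tau n t).
  { replace (snd (Cminus (Xc t i) (pic (S n) t i))) with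
      (Series (fun k => snd (Dl k t i)) - sum_n (fun k => snd (Dl k t i)) n).
    2:{ rewrite snd_Cminus, pic_snd. unfold Xc. cbn [snd]. ring. }
    apply tail_bound. intros k. eapply Rle_trans. apply Rabs_snd_le. apply Dl_bound. }
  lra.
Qed.

Lemma tau_mono n t T : Rabs t <= T -> tau n t <= tau n T.
Proof.
  intros H. unfold tau. apply Series_le.
  - intros k. split. apply bnd_nonneg. unfold bnd.
    unfold Rdiv. apply Rmult_le_compat_r. apply Rlt_le, Rinv_0_lt_compat, lt_0_INR, lt_O_fact.
    apply Rmult_le_compat_l. apply Rmult_le_pos. lra. apply pow_le; lra.
    apply pow_incr. split. apply Rabs_pos. rewrite (Rabs_pos_eq T). exact H.
    pose proof (Rabs_pos t). lra.
  - apply (ex_series_incr_n (fun k => bnd k T) (S n)). apply bnd_ex.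
Qed.

Lemma tau_lim T : is_lim_seq (fun n => tau n T) 0.
Proof.
  apply is_lim_seq_ext with (fun n => Series (fun k => bnd k T) - sum_n (fun k => bnd k T) n).
  - intros n. rewrite (Series_incr_n _ (S n)) by (lia || apply bnd_ex).
    rewrite sum_n_Reals. simpl pred. unfold tau. ring.
  - replace 0 with (Series (fun k => bnd k T) - Series (fun k => bnd k T)) by ring.
    apply is_lim_seq_minus'. apply is_lim_seq_const.
    pose proof (Series_correct _ (bnd_ex T)) as H. exact H.
Qed.

Lemma lim2 (e1 e2 : nat -> R) : is_lim_seq e1 0 -> is_lim_seq e2 0 -> is_lim_seq (fun n => 2 * e1 n + e2 n) 0.
Proof.
  intros H1 H2. replace 0 with (2 * 0 + 0) by ring.
  apply is_lim_seq_plus'. apply is_lim_seq_scal_l with (a := 2) (lu := 0) in H1. exact H1. exact H2.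
Qed.

Lemma Xc_eq' t i z (e : nat -> R) : is_lim_seq e 0 ->
  (forall n, Cmod (Cminus (pic (S (S n)) t i) z) <= e n) -> Xc t i = z.
Proof.
  intros He H. apply Cmod_eq0_minus.
  apply (eps_le _ 0 (fun n => 2 * tau (S n) t + e n)).
  - intros n. rewrite Rplus_0_l. eapply Rle_trans. apply (Cmod_tri3 _ (pic (S (S n)) t i)).
    pose proof (Xc_close (S n) t i). specialize (H n). lra.
  - apply lim2; [|exact He]. apply (is_lim_seq_incr_1 (fun n => tau n t)). apply tau_lim.
Qed.

Lemma Xc_eq t i z (e : nat -> R) : is_lim_seq e 0 ->
  (forall n, Cmod (Cminus (pic (S n) t i) z) <= e n) -> Xc t i = z.
Proof.
  intros He H. apply (Xc_eq' t i z (fun n => e (S n))).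
  apply (is_lim_seq_incr_1 e). exact He. intros n. apply H.
Qed.

Lemma Xc_lip j t t' : Cmod (Cminus (Xc t j) (Xc t' j)) <= B * Rabs (t - t').
Proof.
  set (T := Rmax (Rabs t) (Rabs t')).
  apply (eps_le _ _ (fun n => 2 * tau n T + 2 * tau n T)).
  - intros n. eapply Rle_trans. apply (Cmod_tri3 _ (pic (S n) t j)).
    eapply Rle_trans. apply Rplus_le_compat_l. apply (Cmod_tri3 _ (pic (S n) t' j)).
    pose proof (Xc_close n t j) as H1. pose proof (Xc_close n t' j) as H2.
    rewrite Cmod_minus_sym in H2.
    pose proof (pic_lip (S n) j t t') as H3.
    pose proof (tau_mono n t T (Rmax_l _ _)). pose proof (tau_mono n t' T (Rmax_r _ _)). lra.
  - replace 0 with (2 * 0 + 0) by ring. apply is_lim_seq_plus'.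
    apply is_lim_seq_scal_l with (a := 2) (lu := 0). apply tau_lim.
    replace (Finite 0) with (Rbar_mult 2 0) by (simpl; f_equal; ring).
    apply is_lim_seq_scal_l. apply tau_lim.
Qed.

Lemma Xc_int t i : Xc t i = Cplus (x0 i) (RIntC (fun s => G i s (Xc s)) 0 t).
Proof.
  apply (Xc_eq' t i _ (fun n => Rabs t * (L * (2 * tau n (Rabs t))))).
  - replace (Finite 0) with (Rbar_mult (Rabs t * L * 2) 0) by (simpl; f_equal; ring).
    apply is_lim_seq_ext with (fun n => Rabs t * L * 2 * tau n (Rabs t)).
    intros n; ring. apply is_lim_seq_scal_l. apply tau_lim.
  - intros n.
    change (pic (S (S n)) t i) with (Cplus (x0 i) (RIntC (fun s => G i s (pic (S n) s)) 0 t)).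
    rewrite Cdiff3. rewrite <- minusC'.
    rewrite <- (@RInt_minus C_R_CompleteNormedModule).
    2: apply comp_exint; apply pic_lip.
    2: apply comp_exint; apply Xc_lip.
    rewrite <- normC_Cmod.
    replace (Rabs t) with (Rabs (t - 0)) at 1 by (f_equal; ring).
    apply (@norm_RInt_le_const_abs C_R_NormedModule (fun s => minus (G i s (pic (S n) s)) (G i s (Xc s))) 0 t).
    + intros s Hs. rewrite normC_Cmod. apply HL.
      intros j. rewrite Cmod_minus_sym. eapply Rle_trans. apply Xc_close.
      apply Rmult_le_compat_l. lra. apply tau_mono.
      unfold Rmin, Rmax in Hs. destruct (Rle_dec 0 t).
      * rewrite Rabs_pos_eq by lra. rewrite Rabs_pos_eq by lra. lra.
      * rewrite (Rabs_left t) by lra. unfold Rabs. destruct (Rcase_abs s); lra.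
    + apply (@RInt_correct C_R_CompleteNormedModule).
      apply (@ex_RInt_continuous C_R_CompleteNormedModule). intros z _.
      apply (lip_continuous _ ((L * B + K) + (L * B + K))).
      apply (Cmod_minus_lip (fun s => G i s (pic (S n) s)) (fun s => G i s (Xc s))).
      apply g_lip. apply comp_lip. apply Xc_lip.
Qed.

Lemma Xc_derive t i : is_derive (fun s => Xc s i) t (G i t (Xc t)).
Proof.
  apply is_derive_ext with (fun s => @plus C_R_NormedModule (x0 i) (RIntC (fun s => G i s (Xc s)) 0 s)).
  { intros s. rewrite plusC. symmetry. apply Xc_int. }
  replace (G i t (Xc t)) with (@plus C_R_NormedModule zero (G i t (Xc t))) by (rewrite plus_zero_l; reflexivity).
  apply (@is_derive_plus R_AbsRing C_R_NormedModule (fun _ => x0 i) (fun s => RIntC (fun s => G i s (Xc s)) 0 s)).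
  - apply is_derive_const.
  - apply (@is_derive_RInt C_R_NormedModule (fun s => G i s (Xc s)) (fun s => RIntC (fun s => G i s (Xc s)) 0 s) 0).
    + apply filter_forall. intros b. apply (@RInt_correct C_R_CompleteNormedModule).
      apply comp_exint. apply Xc_lip.
    + apply comp_cont. apply Xc_lip.
Qed.

Lemma Xc_init i : Xc 0 i = x0 i.
Proof.
  apply (Xc_eq 0 i (x0 i) (fun _ => 0)). apply is_lim_seq_const.
  intros n. simpl pic. rewrite RInt_point, zeroC.
  replace (Cminus (Cplus (x0 i) (RtoC 0)) (x0 i)) with (RtoC 0) by ring. rewrite Cmod_0. lra.
Qed.

Lemma Xc_const i : (forall s x, G i s x = RtoC 0) -> forall t, Xc t i = x0 i.
Proof.
  intros H0 t.
  apply (Xc_eq t i (x0 i) (fun _ => 0)). apply is_lim_seq_const.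
  intros n. change (pic (S n) t i) with (Cplus (x0 i) (RIntC (fun s => G i s (pic n s)) 0 t)).
  rewrite (@RInt_ext C_R_CompleteNormedModule _ (fun _ => RtoC 0)) by (intros; apply H0).
  rewrite (@RInt_const C_R_CompleteNormedModule).
  rewrite (@scal_zero_r R_AbsRing C_R_CompleteNormedModule), Cdiff2. right. apply Cmod_0.
Qed.

Variable sg : I -> I.
Hypothesis Hsg : forall i s x, (forall j, x (sg j) = Cconj (x j)) -> G (sg i) s x = Cconj (G i s x).
Hypothesis Hx0 : forall j, x0 (sg j) = Cconj (x0 j).

Lemma pic_sym n : forall t j, pic n t (sg j) = Cconj (pic n t j).
Proof.
  induction n as [|n IH]; intros t j.
  - apply Hx0.
  - change (pic (S n) t (sg j)) with (Cplus (x0 (sg j)) (RIntC (fun s => G (sg j) s (pic n s)) 0 t)).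
    change (pic (S n) t j) with (Cplus (x0 j) (RIntC (fun s => G j s (pic n s)) 0 t)).
    rewrite (@RInt_ext C_R_CompleteNormedModule (fun s => G (sg j) s (pic n s)) (fun s => Cconj (G j s (pic n s)))).
    2:{ intros s _. apply Hsg. intros k. apply IH. }
    rewrite RInt_conj. rewrite Hx0. rewrite Cplus_conj. reflexivity.
    apply comp_exint. apply pic_lip.
Qed.

Lemma Xc_sym t j : Xc t (sg j) = Cconj (Xc t j).
Proof.
  apply (Xc_eq t (sg j) _ (fun n => 2 * tau n t)).
  - replace (Finite 0) with (Rbar_mult 2 0) by (simpl; f_equal; ring).
    apply is_lim_seq_scal_l. apply tau_lim.
  - intros n. rewrite pic_sym. rewrite <- Cminus_conj, Cmod_conj, Cmod_minus_sym. apply Xc_close.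
Qed.
End ODE.

Theorem ode_exists (I : Type) (G : I -> R -> (I -> C) -> C) (x0 : I -> C) (B L K : R) (sg : I -> I) :
  0 <= B -> 0 <= L -> 0 <= K ->
  (forall i s x, Cmod (G i s x) <= B) ->
  (forall i s x y d, (forall j, Cmod (Cminus (x j) (y j)) <= d) ->
     Cmod (Cminus (G i s x) (G i s y)) <= L * d) ->
  (forall i s s' x, Cmod (Cminus (G i s x) (G i s' x)) <= K * Rabs (s - s')) ->
  (forall i s x, (forall j, x (sg j) = Cconj (x j)) -> G (sg i) s x = Cconj (G i s x)) ->
  (forall j, x0 (sg j) = Cconj (x0 j)) ->
  exists X : R -> I -> C,
    X 0 = x0 /\
    (forall t i, is_derive (fun s => X s i) t (G i t (X t))) /\
    (forall t j, X t (sg j) = Cconj (X t j)) /\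
    (forall i, (forall s x, G i s x = RtoC 0) -> forall t, X t i = x0 i).
Proof.
  intros HB0 HL0 HK0 HB HL HT Hsg Hx0.
  exists (Xc I G x0). split; [|split; [|split]].
  - apply functional_extensionality. intros i. exact (Xc_init I G x0 B L K HB0 HL0 HB HL HT i).
  - intros t i. exact (Xc_derive I G x0 B L K HB0 HL0 HB HL HT t i).
  - intros t j. exact (Xc_sym I G x0 B L K HB0 HL0 HB HL HT sg Hsg Hx0 t j).
  - intros i H t. exact (Xc_const I G x0 B L K HB0 HL0 HB HL HT i H t).
Qed.

Lemma sum_n_S_l {G : AbelianMonoid} (a : nat -> G) n :
  sum_n a (S n) = plus (a O) (sum_n (fun j => a (S j)) n).
Proof.
  unfold sum_n. rewrite (sum_n_m_Chasles a 0 0 (S n)) by lia.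
  rewrite sum_n_n. rewrite <- sum_n_m_S. reflexivity.
Qed.

Lemma sum_n_rev {G : AbelianMonoid} n : forall (a : nat -> G),
  sum_n a n = sum_n (fun j => a (n - j)%nat) n.
Proof.
  induction n as [|n IH]; intros a.
  - reflexivity.
  - rewrite sum_n_S_l. rewrite sum_Sn. rewrite Nat.sub_diag.
    rewrite (IH (fun j => a (S j))).
    rewrite plus_comm. f_equal.
    apply sum_n_ext_loc. intros j Hj. f_equal. lia.
Qed.

Lemma sumC_S (f : nat -> C) n : sum_n f (S n) = Cplus (sum_n f n) (f (S n)).
Proof. rewrite sum_Sn. reflexivity. Qed.

Lemma Cmod_sum (f : nat -> C) n : Cmod (sum_n f n) <= sum_n (fun j => Cmod (f j)) n.
Proof.
  induction n as [|n IH].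
  - rewrite !sum_O. lra.
  - rewrite sumC_S. rewrite sum_Sn. rewrite plusR.
    eapply Rle_trans. apply Cmod_triangle. lra.
Qed.

Lemma sumR_le (f g : nat -> R) n : (forall j, (j <= n)%nat -> f j <= g j) -> sum_n f n <= sum_n g n.
Proof.
  induction n as [|n IH]; intros H.
  - rewrite !sum_O. apply H. lia.
  - rewrite !sum_Sn, !plusR. apply Rplus_le_compat. apply IH. intros; apply H; lia. apply H; lia.
Qed.

Lemma sumR_le_const (g : nat -> R) n c : (forall j, (j <= n)%nat -> g j <= c) -> sum_n g n <= INR (S n) * c.
Proof.
  intros H. rewrite <- sum_n_const. apply sumR_le. exact H.
Qed.

Lemma Cmod_sum_le (f : nat -> C) n c : (forall j, (j <= n)%nat -> Cmod (f j) <= c) -> Cmod (sum_n f n) <= INR (S n) * c.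
Proof. intros H. eapply Rle_trans. apply Cmod_sum. apply sumR_le_const. exact H. Qed.

Lemma sumC_minus (f g : nat -> C) n : Cminus (sum_n f n) (sum_n g n) = sum_n (fun j => Cminus (f j) (g j)) n.
Proof.
  induction n as [|n IH].
  - rewrite !sum_O. reflexivity.
  - rewrite !sumC_S. rewrite <- IH. ring.
Qed.

Lemma sumC_conj (f : nat -> C) n : Cconj (sum_n f n) = sum_n (fun j => Cconj (f j)) n.
Proof.
  induction n as [|n IH].
  - rewrite !sum_O. reflexivity.
  - rewrite !sumC_S. rewrite Cplus_conj, IH. reflexivity.
Qed.

Lemma sumC_ext (f g : nat -> C) n : (forall j, (j <= n)%nat -> f j = g j) -> sum_n f n = sum_n g n.
Proof. apply sum_n_ext_loc. Qed.

Definition clampR (M a : R) : R := Rmax (- M) (Rmin M a).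
Definition clampC (M : R) (z : C) : C := (clampR M (fst z), clampR M (snd z)).

Lemma clampR_lip M a b : 0 <= M -> Rabs (clampR M a - clampR M b) <= Rabs (a - b).
Proof.
  intros HM. unfold clampR, Rmax, Rmin.
  repeat (destruct (Rle_dec _ _)); unfold Rabs; repeat (destruct (Rcase_abs _)); lra.
Qed.
Lemma clampR_bound M a : 0 <= M -> Rabs (clampR M a) <= M.
Proof.
  intros HM. unfold clampR, Rmax, Rmin.
  repeat (destruct (Rle_dec _ _)); unfold Rabs; repeat (destruct (Rcase_abs _)); lra.
Qed.
Lemma clampR_opp M a : 0 <= M -> clampR M (- a) = - clampR M a.
Proof.
  intros HM. unfold clampR, Rmax, Rmin.
  repeat (destruct (Rle_dec _ _)); lra.
Qed.
Lemma clampR_id M a : Rabs a <= M -> clampR M a = a.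
Proof.
  intros H. unfold clampR, Rmax, Rmin. unfold Rabs in H. destruct (Rcase_abs a);
  repeat (destruct (Rle_dec _ _)); lra.
Qed.

Lemma clampC_bound M z : 0 <= M -> Cmod (clampC M z) <= 2 * M.
Proof.
  intros HM. eapply Rle_trans. apply Cmod_le_sum. simpl.
  pose proof (clampR_bound M (fst z) HM). pose proof (clampR_bound M (snd z) HM). lra.
Qed.
Lemma clampC_lip M z w : 0 <= M -> Cmod (Cminus (clampC M z) (clampC M w)) <= 2 * Cmod (Cminus z w).
Proof.
  intros HM. eapply Rle_trans. apply Cmod_le_sum.
  rewrite fst_Cminus, snd_Cminus. simpl.
  pose proof (clampR_lip M (fst z) (fst w) HM). pose proof (clampR_lip M (snd z) (snd w) HM).
  pose proof (Rabs_fst_le (Cminus z w)). pose proof (Rabs_snd_le (Cminus z w)).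
  rewrite fst_Cminus in *. rewrite snd_Cminus in *. lra.
Qed.
Lemma clampC_conj M z : 0 <= M -> clampC M (Cconj z) = Cconj (clampC M z).
Proof.
  intros HM. destruct z as [a b]. unfold clampC, Cconj. simpl. rewrite clampR_opp by exact HM. reflexivity.
Qed.

Lemma cos_lip a b : Rabs (cos a - cos b) <= Rabs (a - b).
Proof.
  destruct (MVT_abs cos (fun x => - sin x) b a) as [c [Hc _]].
  { intros c _. apply derivable_pt_lim_cos. }
  rewrite Hc. rewrite Rabs_Ropp. rewrite <- (Rmult_1_l (Rabs (a - b))) at 2.
  apply Rmult_le_compat_r. apply Rabs_pos. apply Rabs_le. apply SIN_bound.
Qed.
Lemma sin_lip a b : Rabs (sin a - sin b) <= Rabs (a - b).
Proof.
  destruct (MVT_abs sin cos b a) as [c [Hc _]].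
  { intros c _. apply derivable_pt_lim_sin. }
  rewrite Hc. rewrite <- (Rmult_1_l (Rabs (a - b))) at 2.
  apply Rmult_le_compat_r. apply Rabs_pos. apply Rabs_le. apply COS_bound.
Qed.
Lemma cexpi_lip a b : Cmod (Cminus (cexpi a) (cexpi b)) <= 2 * Rabs (a - b).
Proof.
  eapply Rle_trans. apply Cmod_le_sum. rewrite fst_Cminus, snd_Cminus. unfold cexpi; simpl.
  pose proof (cos_lip a b). pose proof (sin_lip a b). lra.
Qed.
Lemma cexpi_mod a : Cmod (cexpi a) = 1.
Proof.
  unfold cexpi, Cmod. simpl. replace (cos a * (cos a * 1) + sin a * (sin a * 1)) with 1.
  apply sqrt_1. pose proof (sin2_cos2 a). unfold Rsqr in H. lra.
Qed.
Lemma cexpi_opp a : cexpi (- a) = Cconj (cexpi a).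
Proof. unfold cexpi, Cconj. simpl. rewrite cos_neg, sin_neg. reflexivity. Qed.

Definition k1of (N j : nat) : Z := (Z.of_nat j - Z.of_nat N)%Z.

Definition R3 (N : nat) (t : R) (a b c d : fourier) (k : Z) : C :=
  if (Z.abs k <=? Z.of_nat N)%Z then
    Cmult (Cmult (Cmult (RtoC (/2)) Ci) (RtoC (IZR k)))
      (Cminus (conv N t k a b) (conv N t k c d))
  else RtoC 0.

Lemma rhs_u_R3 N t u v k : rhs_u N t u v k = R3 N t (proj N u) (proj N v) (proj N u) (proj N u) k.
Proof. reflexivity. Qed.
Lemma rhs_v_R3 N t u v k : rhs_v N t u v k = R3 N t (proj N u) (proj N v) (proj N v) (proj N v) k.
Proof. reflexivity. Qed.

Lemma IZR_abs_le (k : Z) (N : nat) : (Z.abs k <= Z.of_nat N)%Z -> Rabs (IZR k) <= INR N.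
Proof.
  intros H. rewrite <- abs_IZR. rewrite INR_IZR_INZ. apply IZR_le. exact H.
Qed.

Lemma coef_mod N k : (Z.abs k <= Z.of_nat N)%Z ->
  Cmod (Cmult (Cmult (RtoC (/2)) Ci) (RtoC (IZR k))) <= INR N / 2.
Proof.
  intros H. rewrite !Cmod_mult, Cmod_Ci, !Cmod_R.
  pose proof (IZR_abs_le k N H). rewrite Rabs_pos_eq by lra. lra.
Qed.

Lemma conv_bound N t k (a b : fourier) M : 0 <= M ->
  (forall j, Cmod (a j) <= M) -> (forall j, Cmod (b j) <= M) ->
  Cmod (conv N t k a b) <= INR (S (2 * N)) * (M * M).
Proof.
  intros HM Ha Hb. unfold conv. apply Cmod_sum_le. intros j _.
  rewrite !Cmod_mult, cexpi_mod. rewrite Rmult_1_l.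
  apply Rmult_le_compat; try apply Cmod_ge_0; auto.
Qed.

Lemma conv_lip N t k (a b a' b' : fourier) M d : 0 <= M ->
  (forall j, Cmod (a j) <= M) -> (forall j, Cmod (b' j) <= M) ->
  (forall j, Cmod (Cminus (a j) (a' j)) <= d) -> (forall j, Cmod (Cminus (b j) (b' j)) <= d) ->
  Cmod (Cminus (conv N t k a b) (conv N t k a' b')) <= INR (S (2 * N)) * (2 * M * d).
Proof.
  intros HM Ha Hb' Hda Hdb. unfold conv. rewrite sumC_minus. apply Cmod_sum_le. intros j _.
  set (k1 := (Z.of_nat j - Z.of_nat N)%Z).
  set (e := cexpi _).
  replace (Cminus (Cmult e (Cmult (a k1) (b (k - k1)%Z))) (Cmult e (Cmult (a' k1) (b' (k - k1)%Z))))
    with (Cmult e (Cplus (Cmult (a k1) (Cminus (b (k - k1)%Z) (b' (k - k1)%Z)))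
                         (Cmult (Cminus (a k1) (a' k1)) (b' (k - k1)%Z)))) by ring.
  rewrite Cmod_mult. unfold e. rewrite cexpi_mod, Rmult_1_l.
  eapply Rle_trans. apply Cmod_triangle. rewrite !Cmod_mult.
  specialize (Ha k1). specialize (Hb' (k - k1)%Z). specialize (Hda k1). specialize (Hdb (k - k1)%Z).
  pose proof (Cmod_ge_0 (a k1)). pose proof (Cmod_ge_0 (b' (k - k1)%Z)).
  pose proof (Cmod_ge_0 (Cminus (a k1) (a' k1))). pose proof (Cmod_ge_0 (Cminus (b (k - k1)%Z) (b' (k - k1)%Z))).
  nra.
Qed.

Lemma conv_tlip N s s' k (a b : fourier) M : (Z.abs k <= Z.of_nat N)%Z -> 0 <= M ->
  (forall j, Cmod (a j) <= M) -> (forall j, Cmod (b j) <= M) ->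
  Cmod (Cminus (conv N s k a b) (conv N s' k a b)) <=
    INR (S (2 * N)) * (2 * (3 * INR N * INR N * (2 * INR N)) * (M * M)) * Rabs (s - s').
Proof.
  intros Hk HM Ha Hb. unfold conv. rewrite sumC_minus.
  rewrite Rmult_assoc. apply Cmod_sum_le. intros j Hj.
  set (k1 := (Z.of_nat j - Z.of_nat N)%Z).
  assert (Hk1 : (Z.abs k1 <= Z.of_nat N)%Z) by (unfold k1; lia).
  assert (Hk2 : (Z.abs (k - k1) <= Z.of_nat (2 * N))%Z) by (unfold k1; lia).
  pose proof (IZR_abs_le k N Hk) as Ak. pose proof (IZR_abs_le k1 N Hk1) as Ak1.
  pose proof (IZR_abs_le (k - k1) (2 * N) Hk2) as Ak2. rewrite mult_INR in Ak2. simpl (INR 2) in Ak2.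
  set (th := 3 * IZR k * IZR k1 * IZR (k - k1)).
  replace (3 * IZR k * IZR k1 * IZR (k - k1) * s) with (th * s) by (unfold th; ring).
  replace (3 * IZR k * IZR k1 * IZR (k - k1) * s') with (th * s') by (unfold th; ring).
  replace (Cminus (Cmult (cexpi (th * s)) (Cmult (a k1) (b (k - k1)%Z))) (Cmult (cexpi (th * s')) (Cmult (a k1) (b (k - k1)%Z))))
    with (Cmult (Cminus (cexpi (th * s)) (cexpi (th * s'))) (Cmult (a k1) (b (k - k1)%Z))) by ring.
  rewrite !Cmod_mult.
  assert (Hth : Rabs th <= 3 * INR N * INR N * (2 * INR N)).
  { unfold th. rewrite !Rabs_mult. rewrite (Rabs_pos_eq 3) by lra.
    pose proof (Rabs_pos (IZR k)). pose proof (Rabs_pos (IZR k1)). pose proof (Rabs_pos (IZR (k - k1))).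
    apply Rmult_le_compat; try nra. }
  pose proof (cexpi_lip (th * s) (th * s')) as Hc.
  replace (th * s - th * s') with (th * (s - s')) in Hc by ring. rewrite Rabs_mult in Hc.
  specialize (Ha k1). specialize (Hb (k - k1)%Z).
  pose proof (Cmod_ge_0 (a k1)). pose proof (Cmod_ge_0 (b (k - k1)%Z)).
  pose proof (Rabs_pos (s - s')). pose proof (Rabs_pos th).
  pose proof (Cmod_ge_0 (Cminus (cexpi (th * s)) (cexpi (th * s')))).
  assert (HH1 : Cmod (Cminus (cexpi (th * s)) (cexpi (th * s'))) <= 2 * (3 * INR N * INR N * (2 * INR N)) * Rabs (s - s')) by nra.
  assert (HH2 : Cmod (a k1) * Cmod (b (k - k1)%Z) <= M * M) by nra.
  pose proof (pos_INR N).
  assert (0 <= 2 * (3 * INR N * INR N * (2 * INR N)) * Rabs (s - s')) by (apply Rmult_le_pos; [|lra]; nra).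
  nra.
Qed.

Lemma R3_bound N t (a b c d : fourier) k M : 0 <= M ->
  (forall j, Cmod (a j) <= M) -> (forall j, Cmod (b j) <= M) ->
  (forall j, Cmod (c j) <= M) -> (forall j, Cmod (d j) <= M) ->
  Cmod (R3 N t a b c d k) <= INR N / 2 * (2 * (INR (S (2 * N)) * (M * M))).
Proof.
  intros HM Ha Hb Hc Hd. unfold R3. destruct (Z.leb_spec (Z.abs k) (Z.of_nat N)) as [Hk|Hk].
  - rewrite Cmod_mult. apply Rmult_le_compat. apply Cmod_ge_0. apply Cmod_ge_0.
    apply coef_mod; exact Hk.
    unfold Cminus. eapply Rle_trans. apply Cmod_triangle. rewrite Cmod_opp.
    pose proof (conv_bound N t k a b M HM Ha Hb). pose proof (conv_bound N t k c d M HM Hc Hd). lra.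
  - rewrite Cmod_0. apply Rmult_le_pos. pose proof (pos_INR N); lra.
    pose proof (pos_INR (S (2 * N))). apply Rmult_le_pos. lra. apply Rmult_le_pos. lra. nra.
Qed.

Lemma R3_lip N t (a b c d a' b' c' d' : fourier) k M e : 0 <= M ->
  (forall j, Cmod (a j) <= M) -> (forall j, Cmod (b' j) <= M) ->
  (forall j, Cmod (c j) <= M) -> (forall j, Cmod (d' j) <= M) ->
  (forall j, Cmod (Cminus (a j) (a' j)) <= e) -> (forall j, Cmod (Cminus (b j) (b' j)) <= e) ->
  (forall j, Cmod (Cminus (c j) (c' j)) <= e) -> (forall j, Cmod (Cminus (d j) (d' j)) <= e) ->
  Cmod (Cminus (R3 N t a b c d k) (R3 N t a' b' c' d' k)) <= INR N / 2 * (2 * (INR (S (2 * N)) * (2 * M * e))).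
Proof.
  intros HM Ha Hb Hc Hd Ea Eb Ec Ed.
  assert (He : 0 <= e) by (eapply Rle_trans; [apply Cmod_ge_0|apply (Ea 0%Z)]).
  unfold R3. destruct (Z.leb_spec (Z.abs k) (Z.of_nat N)) as [Hk|Hk].
  - rewrite Cmult_minus_distr_l_aux.
    rewrite Cmod_mult. apply Rmult_le_compat. apply Cmod_ge_0. apply Cmod_ge_0.
    apply coef_mod; exact Hk.
    replace (Cminus (Cminus (conv N t k a b) (conv N t k c d)) (Cminus (conv N t k a' b') (conv N t k c' d')))
      with (Cplus (Cminus (conv N t k a b) (conv N t k a' b')) (Copp (Cminus (conv N t k c d) (conv N t k c' d')))) by ring.
    eapply Rle_trans. apply Cmod_triangle. rewrite Cmod_opp.
    pose proof (conv_lip N t k a b a' b' M e HM Ha Hb Ea Eb).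
    pose proof (conv_lip N t k c d c' d' M e HM Hc Hd Ec Ed). lra.
  - replace (Cminus (RtoC 0) (RtoC 0)) with (RtoC 0) by ring. rewrite Cmod_0.
    pose proof (pos_INR N). pose proof (pos_INR (S (2 * N))).
    apply Rmult_le_pos. lra. apply Rmult_le_pos. lra. apply Rmult_le_pos. lra. nra.
Qed.

Lemma R3_tlip N s s' (a b c d : fourier) k M : 0 <= M ->
  (forall j, Cmod (a j) <= M) -> (forall j, Cmod (b j) <= M) ->
  (forall j, Cmod (c j) <= M) -> (forall j, Cmod (d j) <= M) ->
  Cmod (Cminus (R3 N s a b c d k) (R3 N s' a b c d k)) <=
    (INR N / 2 * (2 * (INR (S (2 * N)) * (2 * (3 * INR N * INR N * (2 * INR N)) * (M * M))))) * Rabs (s - s').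
Proof.
  intros HM Ha Hb Hc Hd. unfold R3. destruct (Z.leb_spec (Z.abs k) (Z.of_nat N)) as [Hk|Hk].
  - rewrite Cmult_minus_distr_l_aux.
    rewrite Cmod_mult. rewrite !Rmult_assoc. apply Rmult_le_compat. apply Cmod_ge_0. apply Cmod_ge_0.
    pose proof (coef_mod N k Hk). lra.
    replace (Cminus (Cminus (conv N s k a b) (conv N s k c d)) (Cminus (conv N s' k a b) (conv N s' k c d)))
      with (Cplus (Cminus (conv N s k a b) (conv N s' k a b)) (Copp (Cminus (conv N s k c d) (conv N s' k c d)))) by ring.
    eapply Rle_trans. apply Cmod_triangle. rewrite Cmod_opp.
    pose proof (conv_tlip N s s' k a b M Hk HM Ha Hb).
    pose proof (conv_tlip N s s' k c d M Hk HM Hc Hd). lra.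
  - replace (Cminus (RtoC 0) (RtoC 0)) with (RtoC 0) by ring. rewrite Cmod_0.
    pose proof (pos_INR N). pose proof (pos_INR (S (2 * N))). pose proof (Rabs_pos (s - s')).
    apply Rmult_le_pos; [|lra].
    apply Rmult_le_pos. lra. apply Rmult_le_pos. lra. apply Rmult_le_pos. lra.
    apply Rmult_le_pos. apply Rmult_le_pos. lra. apply Rmult_le_pos. nra. nra. nra.
Qed.

Lemma proj_bound N (f : fourier) M : 0 <= M -> (forall j, Cmod (f j) <= M) -> forall j, Cmod (proj N f j) <= M.
Proof.
  intros HM H j. unfold proj. destruct (j =? 0)%Z. rewrite Cmod_0; lra.
  destruct (Z.abs j <=? Z.of_nat N)%Z. apply H. rewrite Cmod_0; lra.
Qed.
Lemma proj_diff N (f g : fourier) e : 0 <= e -> (forall j, Cmod (Cminus (f j) (g j)) <= e) ->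
  forall j, Cmod (Cminus (proj N f j) (proj N g j)) <= e.
Proof.
  intros He H j. unfold proj. destruct (j =? 0)%Z.
  replace (Cminus (RtoC 0) (RtoC 0)) with (RtoC 0) by ring. rewrite Cmod_0; lra.
  destruct (Z.abs j <=? Z.of_nat N)%Z. apply H.
  replace (Cminus (RtoC 0) (RtoC 0)) with (RtoC 0) by ring. rewrite Cmod_0; lra.
Qed.
Lemma proj_sym N (f : fourier) : (forall j, f (- j)%Z = Cconj (f j)) -> forall j, proj N f (- j)%Z = Cconj (proj N f j).
Proof.
  intros H j. unfold proj. rewrite Z.abs_opp.
  destruct (Z.eqb_spec j 0) as [->|Hj].
  - simpl. unfold Cconj, RtoC. simpl. f_equal. ring.
  - destruct (Z.eqb_spec (- j) 0) as [Hj'|Hj']. lia.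
    destruct (Z.abs j <=? Z.of_nat N)%Z. apply H. unfold Cconj, RtoC; simpl. f_equal; ring.
Qed.

Lemma conv_sym N t k (a b : fourier) :
  (forall j, a (- j)%Z = Cconj (a j)) -> (forall j, b (- j)%Z = Cconj (b j)) ->
  conv N t (- k) a b = Cconj (conv N t k a b).
Proof.
  intros Ha Hb. unfold conv. rewrite sumC_conj. rewrite (sum_n_rev (2 * N)).
  apply sumC_ext. intros j Hj.
  assert (E1 : (Z.of_nat (2 * N - j) - Z.of_nat N = - (Z.of_nat j - Z.of_nat N))%Z) by lia.
  rewrite E1.
  set (k1 := (Z.of_nat j - Z.of_nat N)%Z).
  assert (E2 : (- k - - k1 = - (k - k1))%Z) by lia. rewrite E2.
  rewrite Ha, Hb. rewrite !Cmult_conj. f_equal.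
  rewrite <- cexpi_opp. f_equal. rewrite !opp_IZR. ring.
Qed.

Lemma R3_sym N t (a b c d : fourier) k :
  (forall j, a (- j)%Z = Cconj (a j)) -> (forall j, b (- j)%Z = Cconj (b j)) ->
  (forall j, c (- j)%Z = Cconj (c j)) -> (forall j, d (- j)%Z = Cconj (d j)) ->
  R3 N t a b c d (- k) = Cconj (R3 N t a b c d k).
Proof.
  intros Ha Hb Hc Hd. unfold R3. rewrite Z.abs_opp.
  destruct (Z.abs k <=? Z.of_nat N)%Z.
  - rewrite (conv_sym N t k a b Ha Hb), (conv_sym N t k c d Hc Hd).
    rewrite Cmult_conj, Cminus_conj. f_equal.
    rewrite opp_IZR. unfold Cconj, Cmult, Ci, RtoC. simpl. f_equal; ring.
  - unfold Cconj, RtoC; simpl. f_equal; ring.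
Qed.

Definition Idx := (bool * Z)%type.
Definition clf (M : R) (x : Idx -> C) (b : bool) : fourier := fun k => clampC M (x (b, k)).
Definition Gf (N : nat) (M : R) (i : Idx) (s : R) (x : Idx -> C) : C :=
  if (snd i =? 0)%Z then RtoC 0 else
  if fst i then rhs_u N s (clf M x true) (clf M x false) (snd i)
  else rhs_v N s (clf M x true) (clf M x false) (snd i).
Definition sgI (i : Idx) : Idx := (fst i, (- snd i)%Z).

Section Field.
Variable N : nat.
Variable M : R.
Hypothesis HM : 0 <= M.

Let Mc := 2 * M.
Lemma HMc : 0 <= Mc. Proof. unfold Mc; lra. Qed.

Lemma pclf_bound x b : forall j, Cmod (proj N (clf M x b) j) <= Mc.
Proof. apply proj_bound. apply HMc. intros j. apply clampC_bound. exact HM. Qed.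

Lemma pclf_diff x y d b : (forall j, Cmod (Cminus (x j) (y j)) <= d) ->
  forall j, Cmod (Cminus (proj N (clf M x b) j) (proj N (clf M y b) j)) <= 2 * d.
Proof.
  intros H. assert (Hd : 0 <= d) by (eapply Rle_trans; [apply Cmod_ge_0|apply (H (true,0%Z))]).
  apply proj_diff. lra. intros j. unfold clf.
  eapply Rle_trans. apply clampC_lip. exact HM. specialize (H (b, j)). lra.
Qed.

Definition Bf := INR N / 2 * (2 * (INR (S (2 * N)) * (Mc * Mc))).
Definition Lf := INR N / 2 * (2 * (INR (S (2 * N)) * (2 * Mc * 2))).
Definition Kf := INR N / 2 * (2 * (INR (S (2 * N)) * (2 * (3 * INR N * INR N * (2 * INR N)) * (Mc * Mc)))).

Lemma Bf_nonneg : 0 <= Bf.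
Proof.
  unfold Bf. pose proof (pos_INR N). pose proof (pos_INR (S (2 * N))). pose proof HMc.
  apply Rmult_le_pos. lra. apply Rmult_le_pos. lra. apply Rmult_le_pos. lra. nra.
Qed.
Lemma Lf_nonneg : 0 <= Lf.
Proof.
  unfold Lf. pose proof (pos_INR N). pose proof (pos_INR (S (2 * N))). pose proof HMc.
  apply Rmult_le_pos. lra. apply Rmult_le_pos. lra. apply Rmult_le_pos. lra. nra.
Qed.
Lemma Kf_nonneg : 0 <= Kf.
Proof.
  unfold Kf. pose proof (pos_INR N). pose proof (pos_INR (S (2 * N))). pose proof HMc.
  apply Rmult_le_pos. lra. apply Rmult_le_pos. lra. apply Rmult_le_pos. lra.
  apply Rmult_le_pos. apply Rmult_le_pos. lra. apply Rmult_le_pos. nra. nra. nra.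
Qed.

Lemma Gf_bound i s x : Cmod (Gf N M i s x) <= Bf.
Proof.
  unfold Gf. destruct (snd i =? 0)%Z. rewrite Cmod_0. apply Bf_nonneg.
  destruct (fst i); [rewrite rhs_u_R3|rewrite rhs_v_R3]; apply R3_bound; try apply HMc; apply pclf_bound.
Qed.

Lemma Gf_lip i s x y d : (forall j, Cmod (Cminus (x j) (y j)) <= d) ->
  Cmod (Cminus (Gf N M i s x) (Gf N M i s y)) <= Lf * d.
Proof.
  intros H. assert (Hd : 0 <= d) by (eapply Rle_trans; [apply Cmod_ge_0|apply (H (true,0%Z))]).
  unfold Gf. destruct (snd i =? 0)%Z.
  { replace (Cminus (RtoC 0) (RtoC 0)) with (RtoC 0) by ring. rewrite Cmod_0.
    apply Rmult_le_pos. apply Lf_nonneg. exact Hd. }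
  replace (Lf * d) with (INR N / 2 * (2 * (INR (S (2 * N)) * (2 * Mc * (2 * d))))) by (unfold Lf; ring).
  destruct (fst i); [rewrite !rhs_u_R3|rewrite !rhs_v_R3]; apply R3_lip; try apply HMc;
    try apply pclf_bound; apply pclf_diff; exact H.
Qed.

Lemma Gf_tlip i s s' x : Cmod (Cminus (Gf N M i s x) (Gf N M i s' x)) <= Kf * Rabs (s - s').
Proof.
  unfold Gf. destruct (snd i =? 0)%Z.
  { replace (Cminus (RtoC 0) (RtoC 0)) with (RtoC 0) by ring. rewrite Cmod_0.
    apply Rmult_le_pos. apply Kf_nonneg. apply Rabs_pos. }
  unfold Kf.
  destruct (fst i); [rewrite !rhs_u_R3|rewrite !rhs_v_R3]; apply R3_tlip; try apply HMc; apply pclf_bound.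
Qed.

Lemma clf_sym x b : (forall j, x (sgI j) = Cconj (x j)) -> forall k, clf M x b (- k)%Z = Cconj (clf M x b k).
Proof.
  intros H k. unfold clf. rewrite <- clampC_conj by exact HM. f_equal. apply (H (b, k)).
Qed.

Lemma Gf_sym i s x : (forall j, x (sgI j) = Cconj (x j)) -> Gf N M (sgI i) s x = Cconj (Gf N M i s x).
Proof.
  intros H. unfold Gf, sgI. simpl.
  destruct (Z.eqb_spec (snd i) 0) as [H0|H0].
  - rewrite H0. simpl. unfold Cconj, RtoC; simpl. f_equal; ring.
  - destruct (Z.eqb_spec (- snd i) 0) as [H1|H1]. lia.
    pose proof (clf_sym x true H) as Ht. pose proof (clf_sym x false H) as Hf.
    destruct (fst i); [rewrite !rhs_u_R3|rewrite !rhs_v_R3]; apply R3_sym; apply proj_sym; assumption.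
Qed.

End Field.

Ltac Cring := match goal with |- ?a = ?b => change (@eq C a b); ring end.

Lemma sumC_plus (f g : nat -> C) n : sum_n (fun j => Cplus (f j) (g j)) n = Cplus (sum_n f n) (sum_n g n).
Proof.
  induction n as [|n IH]. rewrite !sum_O. reflexivity.
  rewrite !sumC_S, IH. Cring.
Qed.
Lemma sumC_scal (a : C) (f : nat -> C) n : sum_n (fun j => Cmult a (f j)) n = Cmult a (sum_n f n).
Proof.
  induction n as [|n IH]. rewrite !sum_O. reflexivity.
  rewrite !sumC_S, IH. Cring.
Qed.
Lemma sumC_zero n : sum_n (fun _ => RtoC 0) n = RtoC 0.
Proof.
  induction n as [|n IH]. rewrite !sum_O. reflexivity.
  rewrite !sumC_S, IH. Cring.
Qed.

Lemma sum_delta (psi : nat -> C) (w : Z) n :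
  sum_n (fun j => if (Z.of_nat j =? w)%Z then psi j else RtoC 0) n =
  if (andb (0 <=? w)%Z (w <=? Z.of_nat n)%Z) then psi (Z.to_nat w) else RtoC 0.
Proof.
  induction n as [|n IH].
  - rewrite sum_O. simpl Z.of_nat.
    destruct (Z.eqb_spec 0 w) as [<-|H]. simpl. reflexivity.
    destruct (Z.leb_spec 0 w); destruct (Z.leb_spec w 0); simpl; try reflexivity; lia.
  - rewrite sumC_S, IH.
    destruct (Z.eqb_spec (Z.of_nat (S n)) w) as [Hw|Hw].
    + subst w. replace (andb (0 <=? Z.of_nat (S n))%Z (Z.of_nat (S n) <=? Z.of_nat n)%Z) with false.
      replace (andb (0 <=? Z.of_nat (S n))%Z (Z.of_nat (S n) <=? Z.of_nat (S n))%Z) with true.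
      rewrite Nat2Z.id. Cring.
      symmetry. apply andb_true_iff. split; apply Z.leb_le; lia.
      symmetry. apply andb_false_iff. right. apply Z.leb_gt. lia.
    + destruct (Z.leb_spec 0 w); destruct (Z.leb_spec w (Z.of_nat n));
      destruct (Z.leb_spec w (Z.of_nat (S n))); simpl; try Cring; lia.
Qed.

Section Core.
Variable N : nat.
Variable t : R.

Definition idx (j : nat) : Z := k1of N j.

Definition Sum3 (g : Z -> Z -> Z -> C) : C :=
  sum_n (fun j1 => sum_n (fun j2 => sum_n (fun j3 => g (idx j1) (idx j2) (idx j3)) (2 * N)) (2 * N)) (2 * N).

Lemma Sum3_swap12 g : Sum3 g = Sum3 (fun a b c => g b a c).
Proof. unfold Sum3. rewrite sum_n_switch. reflexivity. Qed.

Lemma Sum3_swap23 g : Sum3 g = Sum3 (fun a b c => g a c b).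
Proof.
  unfold Sum3. apply sum_n_ext. intros j1. rewrite sum_n_switch. reflexivity.
Qed.

Lemma Sum3_ext g h : (forall a b c, g a b c = h a b c) -> Sum3 g = Sum3 h.
Proof.
  intros H. unfold Sum3. apply sum_n_ext; intros. apply sum_n_ext; intros. apply sum_n_ext; intros. apply H.
Qed.

Lemma Sum3_lin (al be : C) g h :
  Sum3 (fun a b c => Cplus (Cmult al (g a b c)) (Cmult be (h a b c))) = Cplus (Cmult al (Sum3 g)) (Cmult be (Sum3 h)).
Proof.
  unfold Sum3. rewrite <- !sumC_scal, <- sumC_plus. apply sum_n_ext; intros.
  rewrite <- !sumC_scal, <- sumC_plus. apply sum_n_ext; intros.
  rewrite <- !sumC_scal, <- sumC_plus. reflexivity.
Qed.

Lemma Sum3_zero g : (forall a b c, g a b c = RtoC 0) -> Sum3 g = RtoC 0.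
Proof.
  intros H. rewrite (Sum3_ext g (fun _ _ _ => RtoC 0)) by exact H.
  unfold Sum3. rewrite (sum_n_ext _ (fun _ => RtoC 0)). apply sumC_zero.
  intros j. rewrite (sum_n_ext _ (fun _ => RtoC 0)). apply sumC_zero.
  intros. apply sumC_zero.
Qed.


Lemma Sum3_swap13 g : Sum3 g = Sum3 (fun a b c => g c b a).
Proof.
  rewrite Sum3_swap12. rewrite Sum3_swap23. rewrite Sum3_swap12. reflexivity.
Qed.

Lemma Sum3_add g h : Sum3 (fun a b c => Cplus (g a b c) (h a b c)) = Cplus (Sum3 g) (Sum3 h).
Proof.
  rewrite (Sum3_ext _ (fun a b c => Cplus (Cmult (RtoC 1) (g a b c)) (Cmult (RtoC 1) (h a b c)))).
  rewrite Sum3_lin. Cring. intros; Cring.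
Qed.

Definition Ind (a b c : Z) : C := if (a + b + c =? 0)%Z then RtoC 1 else RtoC 0.
Definition E3 (a b c : Z) : C := cexpi (- (3 * IZR a * IZR b * IZR c * t)).
Definition coef (a b c : Z) : C := Cmult (Ind a b c) (E3 a b c).

Lemma coef_12 a b c : coef b a c = coef a b c.
Proof.
  unfold coef, Ind, E3. replace (b + a + c)%Z with (a + b + c)%Z by lia.
  f_equal. f_equal. f_equal. ring.
Qed.
Lemma coef_23 a b c : coef a c b = coef a b c.
Proof.
  unfold coef, Ind, E3. replace (a + c + b)%Z with (a + b + c)%Z by lia.
  f_equal. f_equal. f_equal. ring.
Qed.
Lemma coef_13 a b c : coef c b a = coef a b c.
Proof. rewrite coef_12, coef_23, coef_12. reflexivity. Qed.

Definition W (P Q S : fourier) : C :=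
  Sum3 (fun a b c => Cmult (Cmult (coef a b c) (RtoC (IZR a))) (Cmult (P a) (Cmult (Q b) (S c)))).

Lemma W_23 P Q S : W P Q S = W P S Q.
Proof.
  unfold W. rewrite Sum3_swap23. apply Sum3_ext. intros a b c. rewrite coef_23. Cring.
Qed.

Lemma W_zero P Q S : Cplus (Cplus (W P Q S) (W Q P S)) (W S Q P) = RtoC 0.
Proof.
  set (h := fun a b c => Cmult (coef a b c) (Cmult (P a) (Cmult (Q b) (S c)))).
  assert (H1 : W P Q S = Sum3 (fun a b c => Cmult (RtoC (IZR a)) (h a b c))).
  { unfold W. apply Sum3_ext. intros. unfold h. Cring. }
  assert (H2 : W Q P S = Sum3 (fun a b c => Cmult (RtoC (IZR b)) (h a b c))).
  { unfold W. rewrite Sum3_swap12. apply Sum3_ext. intros. unfold h. rewrite coef_12. Cring. }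
  assert (H3 : W S Q P = Sum3 (fun a b c => Cmult (RtoC (IZR c)) (h a b c))).
  { unfold W. rewrite Sum3_swap13. apply Sum3_ext. intros. unfold h. rewrite coef_13. Cring. }
  rewrite H1, H2, H3. rewrite <- !Sum3_add. apply Sum3_zero.
  intros a b c. unfold h, coef, Ind.
  destruct (Z.eqb_spec (a + b + c) 0) as [E|E].
  - assert (E' : IZR a + IZR b + IZR c = 0).
    { rewrite <- !plus_IZR, E. reflexivity. }
    replace (Cplus (Cplus (Cmult (RtoC (IZR a)) (Cmult (Cmult (RtoC 1) (E3 a b c)) (Cmult (P a) (Cmult (Q b) (S c)))))
      (Cmult (RtoC (IZR b)) (Cmult (Cmult (RtoC 1) (E3 a b c)) (Cmult (P a) (Cmult (Q b) (S c))))))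
      (Cmult (RtoC (IZR c)) (Cmult (Cmult (RtoC 1) (E3 a b c)) (Cmult (P a) (Cmult (Q b) (S c))))))
    with (Cmult (RtoC (IZR a + IZR b + IZR c)) (Cmult (E3 a b c) (Cmult (P a) (Cmult (Q b) (S c))))).
    rewrite E'. Cring.
    rewrite !RtoC_plus. Cring.
  - Cring.
Qed.


Lemma idx_rev j : (j <= 2 * N)%nat -> idx (2 * N - j) = (- idx j)%Z.
Proof. intros H. unfold idx, k1of. rewrite Nat2Z.inj_sub by exact H. lia. Qed.

Lemma idx_range j : (j <= 2 * N)%nat -> (Z.abs (idx j) <= Z.of_nat N)%Z.
Proof. intros H. unfold idx, k1of. lia. Qed.

Lemma collapse (phi : Z -> C) x y : (forall m, (Z.of_nat N < Z.abs m)%Z -> phi m = RtoC 0) ->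
  sum_n (fun j3 => Cmult (Ind x y (idx j3)) (phi (idx j3))) (2 * N) = phi (- x - y)%Z.
Proof.
  intros Hphi.
  rewrite (sum_n_ext _ (fun j => if (Z.of_nat j =? - x - y + Z.of_nat N)%Z then phi (idx j) else RtoC 0)).
  2:{ intros j. unfold Ind, idx, k1of.
      destruct (Z.eqb_spec (x + y + (Z.of_nat j - Z.of_nat N)) 0);
      destruct (Z.eqb_spec (Z.of_nat j) (- x - y + Z.of_nat N)); try lia; Cring. }
  rewrite (sum_delta (fun j => phi (idx j))).
  destruct (Z.leb_spec 0 (- x - y + Z.of_nat N)); destruct (Z.leb_spec (- x - y + Z.of_nat N) (Z.of_nat (2 * N)));
    simpl.
  - f_equal. unfold idx, k1of. rewrite Z2Nat.id by lia. lia.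
  - symmetry. apply Hphi. lia.
  - symmetry. apply Hphi. lia.
  - symmetry. apply Hphi. lia.
Qed.

Definition Tr (a b c : fourier) : C :=
  sum_n (fun j => Cmult (Cmult (RtoC (IZR (idx j))) (c (- idx j)%Z)) (conv N t (idx j) a b)) (2 * N).

Lemma Tr_W (a b c : fourier) : (forall m, (Z.of_nat N < Z.abs m)%Z -> b m = RtoC 0) ->
  Tr a b c = Cmult (RtoC (-1)) (W c a b).
Proof.
  intros Hb. unfold Tr, W, Sum3.
  rewrite (sum_n_rev (2 * N)). rewrite <- sumC_scal.
  apply sum_n_ext_loc. intros j Hj. rewrite (idx_rev j Hj).
  unfold conv. rewrite <- !sumC_scal. apply sum_n_ext. intros j1.
  set (x := idx j). set (y := idx j1).
  change (Z.of_nat j1 - Z.of_nat N)%Z with y.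
  rewrite (sum_n_ext _ (fun j3 => Cmult (Ind x y (idx j3))
     ((fun z => Cmult (Cmult (E3 x y z) (RtoC (IZR x))) (Cmult (c x) (Cmult (a y) (b z)))) (idx j3)))).
  2:{ intros j3. unfold coef. Cring. }
  pose proof (collapse (fun z => Cmult (Cmult (E3 x y z) (RtoC (IZR x))) (Cmult (c x) (Cmult (a y) (b z)))) x y) as Hc.
  cbv beta in Hc. rewrite Hc.
  2:{ intros m Hm. rewrite (Hb m Hm). Cring. }
  rewrite Z.opp_involutive.
  replace (- x - y)%Z with (- x - y)%Z by reflexivity.
  unfold E3.
  replace (3 * IZR (- x) * IZR y * IZR (- x - y) * t) with (- (3 * IZR x * IZR y * IZR (- x - y) * t))
    by (rewrite opp_IZR; ring).
  rewrite opp_IZR. rewrite RtoC_opp. Cring.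
Qed.


Lemma W_lin1 P1 P2 Q S (al be : C) :
  W (fun m => Cplus (Cmult al (P1 m)) (Cmult be (P2 m))) Q S = Cplus (Cmult al (W P1 Q S)) (Cmult be (W P2 Q S)).
Proof. unfold W. rewrite <- Sum3_lin. apply Sum3_ext. intros. Cring. Qed.

Lemma triple_zero (w : C) : Cplus (Cplus w w) w = RtoC 0 -> w = RtoC 0.
Proof.
  intros H. replace w with (Cmult (RtoC (/3)) (Cplus (Cplus w w) w)).
  rewrite H. Cring.
  replace (Cplus (Cplus w w) w) with (Cmult (RtoC 3) w) by (change (@eq C (Cmult (RtoC 3) w) (Cplus (Cplus w w) w)); rewrite <- (Rplus_0_r 3); replace (3 + 0) with (1 + 1 + 1) by ring; rewrite !RtoC_plus; ring).
  rewrite Cmult_assoc, <- RtoC_mult. rewrite Rinv_l by lra. Cring.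
Qed.

Lemma sumC_comb (al : C) (A B C' D : nat -> C) n :
  sum_n (fun j => Cmult al (Cplus (Cminus (A j) (B j)) (Cminus (C' j) (D j)))) n =
  Cmult al (Cplus (Cminus (sum_n A n) (sum_n B n)) (Cminus (sum_n C' n) (sum_n D n))).
Proof.
  rewrite sumC_scal. f_equal. rewrite sumC_plus, !sumC_minus. reflexivity.
Qed.

Definition suppN (f : fourier) := forall m, (Z.of_nat N < Z.abs m)%Z -> f m = RtoC 0.

Lemma core (p q : fourier) : suppN p -> suppN q ->
  sum_n (fun j => Cplus (Cmult (Cminus (Cmult (RtoC 3) (p (- idx j)%Z)) (q (- idx j)%Z)) (R3 N t p q p p (idx j)))
                        (Cmult (Cminus (Cmult (RtoC 3) (q (- idx j)%Z)) (p (- idx j)%Z)) (R3 N t p q q q (idx j)))) (2 * N)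
  = RtoC 0.
Proof.
  intros Hp Hq.
  set (cu := fun m => Cplus (Cmult (RtoC 3) (p m)) (Cmult (RtoC (-1)) (q m))).
  set (cv := fun m => Cplus (Cmult (RtoC 3) (q m)) (Cmult (RtoC (-1)) (p m))).
  set (al := Cmult (RtoC (/2)) Ci).
  transitivity (Cmult al (Cplus (Cminus (Tr p q cu) (Tr p p cu)) (Cminus (Tr p q cv) (Tr q q cv)))).
  { unfold Tr. rewrite <- sumC_comb. apply sum_n_ext_loc. intros j Hj.
    unfold R3. pose proof (idx_range j Hj) as Hr. apply Z.leb_le in Hr. rewrite Hr.
    unfold cu, cv, al. Cring. }
  rewrite !Tr_W by assumption.
  unfold cu, cv. rewrite !W_lin1.
  rewrite (W_23 q p q).
  pose proof (W_zero p p p) as Z1. apply triple_zero in Z1.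
  pose proof (W_zero q q q) as Z2. apply triple_zero in Z2.
  pose proof (W_zero p p q) as Z3. pose proof (W_zero q q p) as Z4.
  assert (E3' : W q p p = Cmult (RtoC (-2)) (W p p q)).
  { replace (W q p p) with (Cminus (Cplus (Cplus (W p p q) (W p p q)) (W q p p)) (Cplus (W p p q) (W p p q))) by Cring.
    rewrite Z3. replace (RtoC (-2)) with (Copp (Cplus (RtoC 1) (RtoC 1))). Cring.
    rewrite <- RtoC_plus, <- RtoC_opp. try (f_equal; ring). }
  assert (E4' : W p q q = Cmult (RtoC (-2)) (W q q p)).
  { replace (W p q q) with (Cminus (Cplus (Cplus (W q q p) (W q q p)) (W p q q)) (Cplus (W q q p) (W q q p))) by Cring.
    rewrite Z4. replace (RtoC (-2)) with (Copp (Cplus (RtoC 1) (RtoC 1))). Cring.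
    rewrite <- RtoC_plus, <- RtoC_opp. try (f_equal; ring). }
  rewrite E3', E4', Z1, Z2.
  replace (RtoC (-2)) with (Copp (Cplus (RtoC 1) (RtoC 1))) by (rewrite <- RtoC_plus, <- RtoC_opp; f_equal; ring).
  replace (RtoC 3) with (Cplus (Cplus (RtoC 1) (RtoC 1)) (RtoC 1)) by (rewrite <- !RtoC_plus; f_equal; ring).
  replace (RtoC (-1)) with (Copp (RtoC 1)) by (rewrite <- RtoC_opp; reflexivity).
  Cring.
Qed.

End Core.

Lemma derive_fst (f : R -> C) t z : is_derive f t z -> is_derive (fun s => fst (f s)) t (fst z).
Proof.
  intros H. unfold is_derive in *.
  apply (filterdiff_comp f (fun c : C_R_NormedModule => fst c) (fun y => scal y z) (fun c : C_R_NormedModule => fst c)) in H.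
  - eapply filterdiff_ext_lin. exact H. intros y. reflexivity.
  - apply filterdiff_linear. apply (@is_linear_fst R_AbsRing R_NormedModule R_NormedModule).
Qed.

Lemma derive_snd (f : R -> C) t z : is_derive f t z -> is_derive (fun s => snd (f s)) t (snd z).
Proof.
  intros H. unfold is_derive in *.
  apply (filterdiff_comp f (fun c : C_R_NormedModule => snd c) (fun y => scal y z) (fun c : C_R_NormedModule => snd c)) in H.
  - eapply filterdiff_ext_lin. exact H. intros y. reflexivity.
  - apply filterdiff_linear. apply (@is_linear_snd R_AbsRing R_NormedModule R_NormedModule).
Qed.

Definition dotC (a z : C) : R := fst a * fst z + snd a * snd z.

Lemma Cmod_sq (z : C) : Cmod z ^ 2 = fst z ^ 2 + snd z ^ 2.
Proof.
  unfold Cmod. rewrite pow2_sqrt. reflexivity.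
  pose proof (pow2_ge_0 (fst z)); pose proof (pow2_ge_0 (snd z)); lra.
Qed.

Lemma derive_Cmod2 (f : R -> C) t z : is_derive f t z ->
  is_derive (fun s => Cmod (f s) ^ 2) t (2 * dotC (f t) z).
Proof.
  intros H. apply is_derive_ext with (fun s => fst (f s) ^ 2 + snd (f s) ^ 2).
  { intros s. symmetry. apply Cmod_sq. }
  pose proof (derive_fst f t z H) as H1. pose proof (derive_snd f t z H) as H2.
  apply (is_derive_pow _ 2) in H1. apply (is_derive_pow _ 2) in H2.
  pose proof (@is_derive_plus R_AbsRing R_NormedModule _ _ t _ _ H1 H2) as H3.
  replace (2 * dotC (f t) z) with (plus (INR 2 * fst z * fst (f t) ^ pred 2) (INR 2 * snd z * snd (f t) ^ pred 2)).
  exact H3.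
  rewrite plusR. unfold dotC. simpl. ring.
Qed.

Lemma derive_Cminus (f g : R -> C) t a b : is_derive f t a -> is_derive g t b ->
  is_derive (fun s => Cminus (f s) (g s)) t (Cminus a b).
Proof.
  intros Ha Hb. pose proof (@is_derive_minus R_AbsRing C_R_NormedModule f g t a b Ha Hb) as H.
  rewrite minusC in H. eapply is_derive_ext; [|exact H]. intros s. simpl. apply minusC.
Qed.

Lemma derive_sum_n (f : nat -> R -> R) (df : nat -> R) t n :
  (forall k, (k <= n)%nat -> is_derive (f k) t (df k)) ->
  is_derive (fun s => sum_n (fun k => f k s) n) t (sum_n df n).
Proof.
  induction n as [|n IH]; intros H.
  - rewrite sum_O. eapply is_derive_ext; [|apply (H 0%nat); lia]. intros s. rewrite sum_O. reflexivity.
  - rewrite sum_Sn. eapply is_derive_ext.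
    { intros s. symmetry. apply sum_Sn. }
    apply (@is_derive_plus R_AbsRing R_NormedModule).
    apply IH. intros; apply H; lia. apply H; lia.
Qed.

Lemma cont_eps (h : R -> R) x : (exists l, is_derive h x l) ->
  forall eps, 0 < eps -> exists del, 0 < del /\ forall r, Rabs (r - x) < del -> Rabs (h r - h x) < eps.
Proof.
  intros [l Hl] eps He.
  assert (Hc : continuity_pt h x).
  { apply continuity_pt_filterlim. apply (ex_derive_continuous h x). exists l. exact Hl. }
  destruct (Hc eps He) as [del [Hd H]].
  exists del. split. exact Hd. intros r Hr.
  destruct (Req_dec r x) as [->|Hne].
  - rewrite Rminus_diag, Rabs_R0. exact He.
  - apply (H r). split. split. exact I. auto. exact Hr.
Qed.

Lemma stay_zero (h dh : R -> R) :
  (forall t, is_derive h t (dh t)) -> h 0 = 0 ->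
  (forall t, 0 <= t -> h t < 1 -> dh t = 0) ->
  forall T, 0 <= T -> h T = 0.
Proof.
  intros Hd H0 Hz T HT.
  set (E := fun s => 0 <= s <= T /\ forall r, 0 <= r <= s -> h r = 0).
  assert (Eb : bound E). { exists T. intros s [Hs _]. lra. }
  assert (Ene : exists s, E s). { exists 0. split. lra. intros r Hr. replace r with 0 by lra. exact H0. }
  destruct (completeness E Eb Ene) as [m [Hub Hlub]].
  assert (Hm0 : 0 <= m). { apply Hub. split. lra. intros r Hr. replace r with 0 by lra. exact H0. }
  assert (HmT : m <= T). { apply Hlub. intros s [Hs _]. lra. }
  assert (A : forall r, 0 <= r < m -> h r = 0).
  { intros r Hr. destruct (classic (exists s, E s /\ r <= s)) as [[s [[_ Hs] Hrs]]|Hn].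
    - apply Hs. lra.
    - exfalso. assert (m <= r). { apply Hlub. intros s Es. destruct (Rle_dec s r). exact r0.
        exfalso. apply Hn. exists s. split. exact Es. lra. } lra. }
  assert (Bm : h m = 0).
  { destruct (Req_dec m 0) as [->|Hm]. exact H0.
    destruct (Req_dec (h m) 0) as [Hhm|Hhm]. exact Hhm. exfalso.
    destruct (cont_eps h m (ex_intro _ _ (Hd m)) (Rabs (h m) / 2)) as [del [Hdel Hc]].
    { pose proof (Rabs_pos_lt _ Hhm). lra. }
    set (r := Rmax 0 (m - del / 2)).
    assert (Hr : 0 <= r < m) by (unfold r, Rmax; destruct (Rle_dec 0 (m - del/2)); lra).
    specialize (Hc r). rewrite (A r Hr) in Hc.
    assert (Rabs (r - m) < del) by (unfold r, Rmax; destruct (Rle_dec 0 (m - del/2)); rewrite Rabs_left; lra).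
    specialize (Hc H). rewrite Rminus_0_l, Rabs_Ropp in Hc. pose proof (Rabs_pos_lt _ Hhm). lra. }
  assert (Em : forall r, 0 <= r <= m -> h r = 0).
  { intros r Hr. destruct (Req_dec r m) as [->|Hne]. exact Bm. apply A. lra. }
  destruct (Req_dec m T) as [<-|HmT'].
  - apply Em. lra.
  - exfalso.
    destruct (cont_eps h m (ex_intro _ _ (Hd m)) (1/2)) as [del [Hdel Hc]]. lra.
    set (d' := Rmin del (T - m) / 2).
    assert (Hd' : 0 < d' /\ d' < del /\ m + d' <= T) by (unfold d', Rmin; destruct (Rle_dec del (T - m)); lra).
    assert (E (m + d')).
    { split. lra. intros r Hr. destruct (Rle_dec r m) as [Hrm|Hrm]. apply Em. lra.
      destruct (MVT_gen h m r dh) as [c [Hc1 Hc2]].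
      - intros x _. apply Hd.
      - intros x _. apply continuity_pt_filterlim. apply (ex_derive_continuous h x). exists (dh x). apply Hd.
      - rewrite Rmin_left in Hc1 by lra. rewrite Rmax_right in Hc1 by lra.
        rewrite Hz in Hc2. rewrite Bm in Hc2. lra. lra.
        specialize (Hc c). rewrite Bm in Hc. assert (Rabs (c - m) < del) by (rewrite Rabs_right; lra).
        specialize (Hc H). rewrite Rminus_0_r in Hc. apply Rabs_def2 in Hc. lra. }
    assert (m + d' <= m) by (apply Hub; exact H). lra.
Qed.

Ltac Rring := match goal with |- ?a = ?b => change (@eq R a b); ring end.

Lemma sumR_S (f : nat -> R) n : sum_n f (S n) = sum_n f n + f (S n).
Proof. rewrite sum_Sn. reflexivity. Qed.
Lemma sumR_S_l (f : nat -> R) n : sum_n f (S n) = f O + sum_n (fun j => f (S j)) n.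
Proof. rewrite sum_n_S_l. reflexivity. Qed.

Lemma reindex (phi : Z -> R) N :
  sum_n (fun j => phi (k1of (S N) j)) (2 * S N) =
  phi 0%Z + sum_n (fun n => phi (Z.of_nat n + 1)%Z + phi (- (Z.of_nat n + 1))%Z) N.
Proof.
  revert phi. induction N as [|N IH]; intros phi.
  - simpl (2 * 1)%nat. rewrite !sumR_S, !sum_O. unfold k1of. simpl. Rring.
  - replace (2 * S (S N))%nat with (S (S (2 * S N))) by lia.
    rewrite sumR_S_l, sumR_S.
    specialize (IH (fun z => phi z)).
    rewrite (sum_n_ext (fun j => phi (k1of (S (S N)) (S j))) (fun j => phi (k1of (S N) j))).
    2:{ intros j. f_equal. unfold k1of. lia. }
    rewrite IH. rewrite sumR_S.
    replace (k1of (S (S N)) 0) with (- (Z.of_nat (S N) + 1))%Z by (unfold k1of; lia).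
    replace (k1of (S (S N)) (S (S (2 * S N)))) with (Z.of_nat (S N) + 1)%Z by (unfold k1of; lia).
    Rring.
Qed.

Lemma sumR_lin3 (a b c : nat -> R) n :
  sum_n (fun k => 2 * a k + 2 * b k + c k) n = 2 * sum_n a n + 2 * sum_n b n + sum_n c n.
Proof.
  induction n as [|n IH]. rewrite !sum_O. Rring.
  rewrite !sumR_S, IH. Rring.
Qed.

Lemma sumR_ge_term (f : nat -> R) n k : (forall j, 0 <= f j) -> (k <= n)%nat -> f k <= sum_n f n.
Proof.
  intros Hf Hk. induction n as [|n IH].
  - replace k with O by lia. rewrite sum_O. lra.
  - rewrite sumR_S. destruct (Nat.eq_dec k (S n)) as [->|Hne]. pose proof (sumR_le (fun _ => 0) f n). 
    assert (0 <= sum_n f n). { eapply Rle_trans; [|apply H; intros; apply Hf]. rewrite sum_n_const. lra. }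
    lra.
    pose proof (Hf (S n)). assert (f k <= sum_n f n) by (apply IH; lia). lra.
Qed.

Lemma sumR_nonneg (f : nat -> R) n : (forall j, 0 <= f j) -> 0 <= sum_n f n.
Proof. intros Hf. eapply Rle_trans; [apply (Hf O)|]. apply sumR_ge_term. exact Hf. lia. Qed.

Lemma fst_sumC (f : nat -> C) n : fst (sum_n f n) = sum_n (fun j => fst (f j)) n.
Proof.
  induction n as [|n IH]. rewrite !sum_O. reflexivity.
  rewrite sumC_S, sumR_S. rewrite <- IH. reflexivity.
Qed.

Lemma sumR_ext_loc (f g : nat -> R) n : (forall j, (j <= n)%nat -> f j = g j) -> sum_n f n = sum_n g n.
Proof. apply sum_n_ext_loc. Qed.

Lemma sumR_scal2 (f : nat -> R) n : sum_n (fun j => 2 * f j) n = 2 * sum_n f n.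
Proof. induction n as [|n IH]. rewrite !sum_O. Rring. rewrite !sumR_S, IH. Rring. Qed.

Definition L2sum (N : nat) (w : fourier) := sum_n (L2_terms w) (N - 1).
Definition Efin (N : nat) (u v : fourier) := 2 * L2sum N u + 2 * L2sum N v + L2sum N (fsub u v).

Lemma L2_nonneg w n : 0 <= L2_terms w n.
Proof. unfold L2_terms. pose proof (pow2_ge_0 (Cmod (w (Z.of_nat n + 1)%Z))). pose proof (pow2_ge_0 (Cmod (w (- (Z.of_nat n + 1))%Z))). lra. Qed.

Lemma L2sum_nonneg N w : 0 <= L2sum N w.
Proof. apply sumR_nonneg. apply L2_nonneg. Qed.

Lemma Efin_nonneg N u v : 0 <= Efin N u v.
Proof. unfold Efin. pose proof (L2sum_nonneg N u). pose proof (L2sum_nonneg N v). pose proof (L2sum_nonneg N (fsub u v)). lra. Qed.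

Lemma mode_le_Efin N u v k : (0 < Z.abs k <= Z.of_nat N)%Z ->
  Cmod (u k) ^ 2 <= Efin N u v /\ Cmod (v k) ^ 2 <= Efin N u v.
Proof.
  intros Hk.
  set (n := (Z.to_nat (Z.abs k) - 1)%nat).
  assert (Hn : (n <= N - 1)%nat) by (unfold n; lia).
  assert (Hkn : k = (Z.of_nat n + 1)%Z \/ k = (- (Z.of_nat n + 1))%Z) by (unfold n; lia).
  assert (Hw : forall w : fourier, Cmod (w k) ^ 2 <= L2sum N w).
  { intros w. eapply Rle_trans; [|apply (sumR_ge_term (L2_terms w) (N - 1) n (L2_nonneg w) Hn)].
    unfold L2_terms. pose proof (pow2_ge_0 (Cmod (w (Z.of_nat n + 1)%Z))). pose proof (pow2_ge_0 (Cmod (w (- (Z.of_nat n + 1))%Z))).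
    destruct Hkn as [E|E]; rewrite E; lra. }
  unfold Efin. pose proof (Hw u). pose proof (Hw v). pose proof (L2sum_nonneg N u). pose proof (L2sum_nonneg N v).
  pose proof (L2sum_nonneg N (fsub u v)). pose proof (pow2_ge_0 (Cmod (u k))). pose proof (pow2_ge_0 (Cmod (v k))). lra.
Qed.

Lemma dq_identity (a b fa fb : C) :
  2 * (2 * dotC a fa) + 2 * (2 * dotC b fb) + 2 * dotC (Cminus a b) (Cminus fa fb) =
  2 * fst (Cplus (Cmult (Cconj (Cminus (Cmult (RtoC 3) a) b)) fa) (Cmult (Cconj (Cminus (Cmult (RtoC 3) b) a)) fb)).
Proof. destruct a, b, fa, fb. unfold dotC, Cconj, Cminus, Cmult, Cplus, Copp, RtoC. simpl. ring. Qed.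

Lemma L2_fsub_le u v n : L2_terms (fsub u v) n <= 2 * L2_terms u n + 2 * L2_terms v n.
Proof.
  unfold L2_terms, fsub. rewrite !Cmod_sq, !fst_Cminus, !snd_Cminus.
  set (a1 := fst (u (Z.of_nat n + 1)%Z)). set (a2 := snd (u (Z.of_nat n + 1)%Z)).
  set (b1 := fst (v (Z.of_nat n + 1)%Z)). set (b2 := snd (v (Z.of_nat n + 1)%Z)).
  set (c1 := fst (u (- (Z.of_nat n + 1))%Z)). set (c2 := snd (u (- (Z.of_nat n + 1))%Z)).
  set (d1 := fst (v (- (Z.of_nat n + 1))%Z)). set (d2 := snd (v (- (Z.of_nat n + 1))%Z)).
  pose proof (pow2_ge_0 (a1 + b1)). pose proof (pow2_ge_0 (a2 + b2)). pose proof (pow2_ge_0 (c1 + d1)). pose proof (pow2_ge_0 (c2 + d2)). nra.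
Qed.

Lemma ex_series_fsub u v : ex_series (L2_terms u) -> ex_series (L2_terms v) -> ex_series (L2_terms (fsub u v)).
Proof.
  intros Hu Hv.
  apply (@ex_series_le R_AbsRing R_CompleteNormedModule _ (fun n => 2 * L2_terms u n + 2 * L2_terms v n)).
  - intros n. unfold norm; simpl. unfold abs; simpl. rewrite Rabs_pos_eq by apply L2_nonneg. apply L2_fsub_le.
  - apply (@ex_series_plus R_AbsRing R_NormedModule).
    apply (ex_series_scal_l 2 _ Hu). apply (ex_series_scal_l 2 _ Hv).
Qed.

Lemma H0_split N w : (0 < N)%nat -> ex_series (L2_terms w) ->
  H0_norm2 w = L2sum N w + Series (fun k => L2_terms w (N + k)%nat).
Proof.
  intros HN Hw. unfold H0_norm2, L2sum. rewrite (Series_incr_n _ N HN Hw).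
  rewrite sum_n_Reals. replace (pred N) with (N - 1)%nat by lia. reflexivity.
Qed.

Lemma derive_q (f g : R -> C) t a b : is_derive f t a -> is_derive g t b ->
  is_derive (fun s => 2 * Cmod (f s) ^ 2 + 2 * Cmod (g s) ^ 2 + Cmod (Cminus (f s) (g s)) ^ 2) t
   (2 * (2 * dotC (f t) a) + 2 * (2 * dotC (g t) b) + 2 * dotC (Cminus (f t) (g t)) (Cminus a b)).
Proof.
  intros Ha Hb.
  pose proof (derive_Cmod2 f t a Ha) as H1.
  pose proof (derive_Cmod2 g t b Hb) as H2.
  pose proof (derive_Cmod2 _ t _ (derive_Cminus f g t a b Ha Hb)) as H3.
  apply (is_derive_scal _ t 2 _) in H1.
  apply (is_derive_scal _ t 2 _) in H2.
  pose proof (@is_derive_plus R_AbsRing R_NormedModule _ _ t _ _ H1 H2) as H4.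
  pose proof (@is_derive_plus R_AbsRing R_NormedModule _ _ t _ _ H4 H3) as H5.
  exact H5.
Qed.

Lemma abs_le_of_sq (a r : R) : 0 <= r -> a ^ 2 <= r ^ 2 -> Rabs a <= r.
Proof.
  intros Hr H. rewrite <- (pow2_abs a) in H. pose proof (Rabs_pos a).
  destruct (Rle_dec (Rabs a) r). exact r0. exfalso. nra.
Qed.

Lemma R3_at0 N t (a b c d : fourier) : R3 N t a b c d 0%Z = RtoC 0.
Proof.
  unfold R3. destruct (Z.abs 0 <=? Z.of_nat N)%Z; [|reflexivity].
  change (IZR 0) with 0. unfold Cmult, RtoC, Ci. simpl. f_equal; ring.
Qed.

Lemma conj_comb (a b : C) : Cconj (Cminus (Cmult (RtoC 3) a) b) = Cminus (Cmult (RtoC 3) (Cconj a)) (Cconj b).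
Proof. destruct a, b. unfold Cconj, Cminus, Cmult, Cplus, Copp, RtoC. simpl. f_equal; ring. Qed.

Lemma proj_in N (f : fourier) k : k <> 0%Z -> (Z.abs k <= Z.of_nat N)%Z -> proj N f k = f k.
Proof.
  intros H1 H2. unfold proj. destruct (Z.eqb_spec k 0). contradiction.
  apply Z.leb_le in H2. rewrite H2. reflexivity.
Qed.

Lemma proj_supp N (f : fourier) : suppN N (proj N f).
Proof.
  intros m Hm. unfold proj. destruct (m =? 0)%Z. reflexivity.
  replace (Z.abs m <=? Z.of_nat N)%Z with false by (symmetry; apply Z.leb_gt; lia). reflexivity.
Qed.

Lemma dotC_0 a : dotC a (RtoC 0) = 0.
Proof. unfold dotC, RtoC. simpl. ring. Qed.

Theorem proposition5p2 (N : nat) (uin vin : Z -> C) :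
  (0 < N)%nat -> in_H0 uin -> in_H0 vin ->
  exists u v : R -> Z -> C,
    u 0%R = uin /\ v 0%R = vin /\
    (forall t : R, 0 <= t -> in_H0 (u t) /\ in_H0 (v t)) /\
    (forall t : R, 0 <= t -> forall k : Z, k <> 0%Z ->
        is_derive (fun s => u s k) t (rhs_u N t (u t) (v t) k) /\
        is_derive (fun s => v s k) t (rhs_v N t (u t) (v t) k)) /\
    (forall t : R, 0 <= t -> energy (u t) (v t) = energy uin vin).
Proof.
  intros HN [[Hu0 Husym] Huex] [[Hv0 Hvsym] Hvex].
  set (E0 := Efin N uin vin).
  assert (HE0 : 0 <= E0) by apply Efin_nonneg.
  set (Rc := E0 + 2).
  assert (HRc : 0 <= Rc) by (unfold Rc; lra).
  set (x0 := fun i : Idx => if fst i then uin (snd i) else vin (snd i)).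
  assert (Hx0 : forall j, x0 (sgI j) = Cconj (x0 j)).
  { intros [b k]. unfold x0, sgI. simpl. destruct b; symmetry; [apply Husym|apply Hvsym]. }
  destruct (ode_exists Idx (Gf N Rc) x0 (Bf N Rc) (Lf N Rc) (Kf N Rc) sgI
    (Bf_nonneg N Rc HRc) (Lf_nonneg N Rc HRc) (Kf_nonneg N Rc HRc)
    (Gf_bound N Rc HRc) (Gf_lip N Rc HRc) (Gf_tlip N Rc HRc) (Gf_sym N Rc HRc) Hx0)
    as [X [HX0 [HXd [HXs HXc]]]].
  set (u := fun t k => X t (true, k)).
  set (v := fun t k => X t (false, k)).
  exists u, v.
  assert (Hconst : forall t b k, (k = 0%Z \/ (Z.of_nat N < Z.abs k)%Z) -> X t (b, k) = x0 (b, k)).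
  { intros t b k Hk. apply HXc. intros s x. unfold Gf. simpl.
    destruct Hk as [->|Hk]. reflexivity.
    destruct (Z.eqb_spec k 0). reflexivity.
    destruct b; [rewrite rhs_u_R3|rewrite rhs_v_R3]; unfold R3;
      replace (Z.abs k <=? Z.of_nat N)%Z with false by (symmetry; apply Z.leb_gt; lia); reflexivity. }
  assert (Hu0' : u 0 = uin).
  { apply functional_extensionality. intros k. unfold u. rewrite HX0. reflexivity. }
  assert (Hv0' : v 0 = vin).
  { apply functional_extensionality. intros k. unfold v. rewrite HX0. reflexivity. }
  set (inbox := fun t => forall b k, (0 < Z.abs k <= Z.of_nat N)%Z ->
      Rabs (fst (X t (b, k))) <= Rc /\ Rabs (snd (X t (b, k))) <= Rc).
  assert (Hproj : forall t b, inbox t -> proj N (clf Rc (X t) b) = proj N (fun k => X t (b, k))).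
  { intros t b Hb. apply functional_extensionality. intros m. unfold proj.
    destruct (Z.eqb_spec m 0). reflexivity.
    destruct (Z.leb_spec (Z.abs m) (Z.of_nat N)); [|reflexivity].
    unfold clf, clampC. destruct (Hb b m) as [H1 H2]. lia.
    rewrite (clampR_id Rc _ H1), (clampR_id Rc _ H2). destruct (X t (b, m)); reflexivity. }
  assert (Hrhs : forall t k, inbox t -> k <> 0%Z ->
     Gf N Rc (true, k) t (X t) = rhs_u N t (u t) (v t) k /\
     Gf N Rc (false, k) t (X t) = rhs_v N t (u t) (v t) k).
  { intros t k Hb Hk. unfold Gf. simpl.
    destruct (Z.eqb_spec k 0). contradiction.
    rewrite !rhs_u_R3, !rhs_v_R3. rewrite !Hproj by exact Hb. split; reflexivity. }
  assert (Hbox : forall t, Efin N (u t) (v t) < E0 + 1 -> inbox t).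
  { intros t H b k Hk. destruct (mode_le_Efin N (u t) (v t) k Hk) as [A B].
    assert (Hz : Cmod (X t (b, k)) ^ 2 <= Efin N (u t) (v t)) by (destruct b; [exact A|exact B]).
    rewrite Cmod_sq in Hz. pose proof (pow2_ge_0 (fst (X t (b, k)))). pose proof (pow2_ge_0 (snd (X t (b, k)))).
    split; apply abs_le_of_sq; try exact HRc; unfold Rc; nra. }
  set (Fu := fun t k => Gf N Rc (true, k) t (X t)).
  set (Fv := fun t k => Gf N Rc (false, k) t (X t)).
  set (dq := fun t k => 2 * (2 * dotC (u t k) (Fu t k)) + 2 * (2 * dotC (v t k) (Fv t k)) +
                         2 * dotC (Cminus (u t k) (v t k)) (Cminus (Fu t k) (Fv t k))).
  assert (Hder : forall t, is_derive (fun s => Efin N (u s) (v s)) t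
                   (sum_n (fun n => dq t (Z.of_nat n + 1)%Z + dq t (- (Z.of_nat n + 1))%Z) (N - 1))).
  { intros t.
    apply is_derive_ext with (fun s => sum_n (fun n => 2 * L2_terms (u s) n + 2 * L2_terms (v s) n + L2_terms (fsub (u s) (v s)) n) (N - 1)).
    { intros s. rewrite sumR_lin3. reflexivity. }
    apply (derive_sum_n (fun n s => 2 * L2_terms (u s) n + 2 * L2_terms (v s) n + L2_terms (fsub (u s) (v s)) n)).
    intros n _.
    set (k1 := (Z.of_nat n + 1)%Z). set (k2 := (- (Z.of_nat n + 1))%Z).
    apply is_derive_ext with (fun s => (2 * Cmod (u s k1) ^ 2 + 2 * Cmod (v s k1) ^ 2 + Cmod (Cminus (u s k1) (v s k1)) ^ 2)
                                     + (2 * Cmod (u s k2) ^ 2 + 2 * Cmod (v s k2) ^ 2 + Cmod (Cminus (u s k2) (v s k2)) ^ 2)).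
    { intros s. unfold L2_terms, fsub, k2. fold k1. match goal with |- ?a = ?b => change (@eq R a b) end. ring. }
    apply (@is_derive_plus R_AbsRing R_NormedModule); unfold dq; apply derive_q; unfold u, Fu, Fv; apply HXd. }
  assert (Hdq0 : forall t, dq t 0%Z = 0).
  { intros t. unfold dq, Fu, Fv, Gf. simpl.
    replace (Cminus (RtoC 0) (RtoC 0)) with (RtoC 0) by ring. rewrite !dotC_0. ring. }
  assert (Hzero : forall t, inbox t ->
     sum_n (fun n => dq t (Z.of_nat n + 1)%Z + dq t (- (Z.of_nat n + 1))%Z) (N - 1) = 0).
  { intros t Hb.
    assert (HNS : N = S (N - 1)) by lia.
    pose proof (reindex (dq t) (N - 1)) as HR. rewrite <- HNS in HR.
    rewrite Hdq0 in HR.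
    assert (HS : sum_n (fun j => dq t (k1of N j)) (2 * N) = 0).
    { set (p := proj N (u t)). set (q := proj N (v t)).
      pose proof (core N t p q (proj_supp N (u t)) (proj_supp N (v t))) as Hc.
      rewrite (sumR_ext_loc _ (fun j => 2 * fst (Cplus
          (Cmult (Cminus (Cmult (RtoC 3) (p (- idx N j)%Z)) (q (- idx N j)%Z)) (R3 N t p q p p (idx N j)))
          (Cmult (Cminus (Cmult (RtoC 3) (q (- idx N j)%Z)) (p (- idx N j)%Z)) (R3 N t p q q q (idx N j)))))).
      - rewrite sumR_scal2. rewrite <- fst_sumC. rewrite Hc. simpl. ring.
      - intros j Hj. pose proof (idx_range N j Hj) as Hr. unfold idx in *.
        set (k := k1of N j) in *.
        destruct (Z.eqb_spec k 0) as [Hk0|Hk0].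
        + rewrite Hk0. rewrite Hdq0. rewrite !R3_at0. simpl. ring.
        + destruct (Hrhs t k Hb Hk0) as [Ru Rv].
          assert (Cu : Cconj (u t k) = p (- k)%Z).
          { unfold p. rewrite proj_in by lia. unfold u. rewrite <- (HXs t (true, k)). reflexivity. }
          assert (Cv : Cconj (v t k) = q (- k)%Z).
          { unfold q. rewrite proj_in by lia. unfold v. rewrite <- (HXs t (false, k)). reflexivity. }
          unfold dq. rewrite dq_identity. unfold Fu, Fv. rewrite Ru, Rv, rhs_u_R3, rhs_v_R3.
          rewrite !conj_comb, Cu, Cv. reflexivity. }
    rewrite HS in HR. lra. }
  assert (Hcons : forall t, 0 <= t -> Efin N (u t) (v t) = E0).
  { intros T HT.
    set (dh := fun t => sum_n (fun n => dq t (Z.of_nat n + 1)%Z + dq t (- (Z.of_nat n + 1))%Z) (N - 1)).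
    pose proof (stay_zero (fun t => Efin N (u t) (v t) - E0) dh) as Hs.
    assert (Hh : Efin N (u T) (v T) - E0 = 0).
    { apply Hs; [| | |exact HT].
      - intros t.
        pose proof (@is_derive_minus R_AbsRing R_NormedModule (fun s => Efin N (u s) (v s)) (fun _ => E0) t _ _ (Hder t) (is_derive_const E0 t)) as HD.
        replace (dh t) with (minus (dh t) (@zero R_AbsRing)).
        exact HD.
        unfold minus, plus, opp, zero. simpl. ring.
      - rewrite Hu0', Hv0'. unfold E0. ring.
      - intros t Ht Hlt. apply Hzero. apply Hbox. lra. }
    lra. }
  assert (Htail : forall t b n, (N <= n)%nat ->
     L2_terms (fun k => X t (b, k)) n = L2_terms (fun k => x0 (b, k)) n).
  { intros t b n Hn. unfold L2_terms. rewrite !Hconst by lia. reflexivity. }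
  assert (Htailf : forall t n, (N <= n)%nat ->
     L2_terms (fsub (u t) (v t)) n = L2_terms (fsub uin vin) n).
  { intros t n Hn. unfold L2_terms, fsub, u, v. rewrite !Hconst by lia. reflexivity. }
  assert (Hex : forall t b, ex_series (L2_terms (fun k => X t (b, k)))).
  { intros t b. apply (ex_series_incr_n _ N).
    apply (ex_series_ext (fun n => L2_terms (fun k => x0 (b, k)) (N + n))).
    intros n. symmetry. apply Htail. lia.
    apply (ex_series_incr_n (fun n => L2_terms (fun k => x0 (b, k)) n) N).
    destruct b; [exact Huex|exact Hvex]. }
  assert (Hexf : forall t, ex_series (L2_terms (fsub (u t) (v t)))).
  { intros t. apply ex_series_fsub; apply Hex. }
  split; [exact Hu0'|]. split; [exact Hv0'|].
  split.
  { intros t Ht. split; split; try split.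
    - unfold u. rewrite Hconst by lia. exact Hu0.
    - intros k. unfold u. rewrite <- (HXs t (true, k)). reflexivity.
    - apply (Hex t true).
    - unfold v. rewrite Hconst by lia. exact Hv0.
    - intros k. unfold v. rewrite <- (HXs t (false, k)). reflexivity.
    - apply (Hex t false). }
  split.
  { intros t Ht k Hk.
    assert (Hb : inbox t) by (apply Hbox; rewrite (Hcons t Ht); lra).
    destruct (Hrhs t k Hb Hk) as [Ru Rv]. split.
    - rewrite <- Ru. apply (HXd t (true, k)).
    - rewrite <- Rv. apply (HXd t (false, k)). }
  { intros t Ht. unfold energy.
    rewrite (H0_split N (u t) HN (Hex t true)), (H0_split N (v t) HN (Hex t false)),
      (H0_split N (fsub (u t) (v t)) HN (Hexf t)).
    rewrite (H0_split N uin HN Huex), (H0_split N vin HN Hvex), (H0_split N (fsub uin vin) HN (ex_series_fsub _ _ Huex Hvex)).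
    rewrite (Series_ext (fun k => L2_terms (u t) (N + k)) (fun k => L2_terms uin (N + k))) by (intros; apply (Htail t true); lia).
    rewrite (Series_ext (fun k => L2_terms (v t) (N + k)) (fun k => L2_terms vin (N + k))) by (intros; apply (Htail t false); lia).
    rewrite (Series_ext (fun k => L2_terms (fsub (u t) (v t)) (N + k)) (fun k => L2_terms (fsub uin vin) (N + k))) by (intros; apply Htailf; lia).
    pose proof (Hcons t Ht) as Hc. unfold E0, Efin in Hc. lra. }
Qed.
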